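(* The class of ordered strict outerconfluent graphs is a hereditary class of ordered graphs: every induced subgraph of an ordered strict outerconfluent graph is an ordered strict outerconfluent graph.
   Context: A strict outerconfluent drawing of a graph $G$ consists of finitely many smooth curves (tracks) in a topological disk, disjoint except at shared endpoints, which are vertices of $G$ (lying on the disk boundary, identified one-for-one with the vertices) or junctions (where at least three tracks meet with the same tangent). An edge curve is a smooth curve in the union of tracks from a vertex to a vertex passing otherwise only through tracks and junctions. Each pair of adjacent vertices must be joined by exactly one edge curve, no edge curve joins a vertex to itself or two non-adjacent vertices, and every track lies on some edge curve. An ordered strict outerconfluent drawing is such a drawing in a specified oriented disk, with all tracks and junctions interior to the disk except for their endpoints at vertices, plus a choice of starting vertex (the empty drawing is allowed, representing the empty graph). An ordered graph is a triple $(V,E,<)$ with $(V,E)$ a finite simple undirected graph and $<$ a total order on $V$; its induced subgraph on $S\subseteq V$ is $(S,E_S,<_S)$ with $E_S$ the edges inside $S$ and $<_S$ the restricted order. The ordered graph of an ordered strict outerconfluent drawing is the drawn graph with vertices ordered clockwise around the disk starting at the starting vertex; a strict outerconfluent ordered graph is any ordered graph arising this way. A class of ordered graphs is hereditary if it contains every induced subgraph of each of its members. *)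

(* Defs.v *)
From Stdlib Require Import Reals.
From mathcomp Require Import all_boot.

Set Implicit Arguments.
Unset Strict Implicit.
Unset Printing Implicit Defensive.

Local Open Scope R_scope.

(** Points of the plane; the fixed oriented disk is the closed unit disk. *)
Definition point := (R * R)%type.
Definition sqnorm (p : point) : R := fst p * fst p + snd p * snd p.

Definition has_C1_deriv (g d : R -> point) : Prop :=
  (forall t, derivable_pt_lim (fun s => fst (g s)) t (fst (d t))) /\
  (forall t, derivable_pt_lim (fun s => snd (g s)) t (snd (d t))) /\
  continuity (fun t => fst (d t)) /\ continuity (fun t => snd (d t)).

Definition smooth_with (g d : R -> point) : Prop :=
  has_C1_deriv g d /\ (forall t, 0 <= t <= 1 -> d t <> (0, 0)).

Definition img (g : R -> point) (p : point) : Prop :=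
  exists t, 0 <= t <= 1 /\ g t = p.

Definition injective_on (A : R -> Prop) (g : R -> point) : Prop :=
  forall s t, A s -> A t -> g s = g t -> s = t.

Definition is_endpoint (g : R -> point) (p : point) : Prop :=
  g 0 = p \/ g 1 = p.

Definition parallel (u v : point) : Prop :=
  fst u * snd v - snd u * fst v = 0.

Section Drawing.
Variables (V : finType) (m : nat).
(** a drawing: angular positions of vertices on the unit circle, measured
    clockwise from an angle [th0]; [m] tracks [tr] with derivatives [dtr]. *)
Variables (th0 : R) (th : V -> R) (tr dtr : 'I_m -> R -> point).

Definition vpos (v : V) : point := (cos (th0 - th v), sin (th0 - th v)).

Definition is_vertex_point (p : point) : Prop := exists w, vpos w = p.

Definition is_junction (p : point) : Prop :=
  sqnorm p < 1 /\
  (exists i1 i2 i3 : 'I_m, i1 <> i2 /\ i1 <> i3 /\ i2 <> i3 /\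
     is_endpoint (tr i1) p /\ is_endpoint (tr i2) p /\ is_endpoint (tr i3) p) /\
  (forall (i j : 'I_m) (a b : R), (a = 0 \/ a = 1) -> (b = 0 \/ b = 1) ->
     tr i a = p -> tr j b = p -> parallel (dtr i a) (dtr j b)).

Definition in_tracks (p : point) : Prop := exists i : 'I_m, img (tr i) p.

Definition tracks_ok : Prop :=
  (forall i, smooth_with (tr i) (dtr i)) /\
  (forall i, injective_on (fun t => 0 <= t <= 1) (tr i)) /\
  (forall i j : 'I_m, i <> j -> forall p, img (tr i) p -> img (tr j) p ->
      is_endpoint (tr i) p /\ is_endpoint (tr j) p) /\
  (forall i t, 0 < t < 1 -> sqnorm (tr i t) < 1) /\
  (forall i p, is_endpoint (tr i) p -> is_vertex_point p \/ is_junction p).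

(** edge curve from [u] to [v]: a smooth curve in the union of tracks,
    starting at [u], ending at [v], avoiding vertices in between.
    Curves are simple, except that the two endpoints may coincide. *)
Definition edge_curve (u v : V) (g : R -> point) : Prop :=
  (exists d, smooth_with g d) /\
  injective_on (fun t => 0 <= t < 1) g /\
  injective_on (fun t => 0 < t <= 1) g /\
  g 0 = vpos u /\ g 1 = vpos v /\
  (forall p, img g p -> in_tracks p) /\
  (forall t, 0 < t < 1 -> ~ is_vertex_point (g t)).

Definition edge_between (u v : V) (g : R -> point) : Prop :=
  edge_curve u v g \/ edge_curve v u g.

Definition same_image (g1 g2 : R -> point) : Prop :=
  forall p, img g1 p <-> img g2 p.

Definition draws (adj : rel V) : Prop :=
  tracks_ok /\
  (forall v, forall g, ~ edge_curve v v g) /\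
  (forall u v, u <> v -> adj u v ->
     (exists g, edge_curve u v g) /\
     (forall g1 g2, edge_between u v g1 -> edge_between u v g2 ->
        same_image g1 g2)) /\
  (forall u v, u <> v -> ~~ adj u v -> forall g, ~ edge_curve u v g) /\
  (forall i, exists u v g, edge_curve u v g /\
     forall p, img (tr i) p -> img g p).

End Drawing.

(** An ordered graph (V, adj, lt) is strict outerconfluent if it is the
    ordered graph of some ordered strict outerconfluent drawing: vertices sit
    on the unit circle at clockwise angles [th v] in [0, 2 pi) from the
    reference angle [th0] (the starting vertex being the one with the least
    angle), and [lt] is the clockwise order. *)
Definition strict_outerconfluent_ordered (V : finType) (adj lt : rel V) : Prop :=
  symmetric adj /\ irreflexive adj /\
  exists (m : nat) (th0 : R) (th : V -> R) (tr dtr : 'I_m -> R -> point),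
    (forall v, 0 <= th v < 2 * PI) /\
    injective th /\
    (forall x y, lt x y <-> th x < th y) /\
    draws th0 th tr dtr adj.

Definition induced_adj (V : finType) (S : {set V}) (adj : rel V)
  : rel {x : V | x \in S} := fun x y => adj (val x) (val y).
Definition induced_lt (V : finType) (S : {set V}) (lt : rel V)
  : rel {x : V | x \in S} := fun x y => lt (val x) (val y).
Arguments induced_adj {V} S adj.
Arguments induced_lt {V} S lt.

(* Main.v *)
Require Import Defs.
From Stdlib Require Import Reals Lra.
From Stdlib Require Import Classical ClassicalEpsilon FunctionalExtensionality.
From mathcomp Require Import all_boot.
Local Open Scope R_scope.

Definition pdiff (p q : point) : point := (fst p - fst q, snd p - snd q).
Definition dist1 (p q : point) : R := Rabs (fst p - fst q) + Rabs (snd p - snd q).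

Lemma dist1_ge0 p q : 0 <= dist1 p q.
Proof. unfold dist1; pose proof (Rabs_pos (fst p - fst q)); pose proof (Rabs_pos (snd p - snd q)); lra. Qed.

Lemma dist1_sym p q : dist1 p q = dist1 q p.
Proof. unfold dist1; rewrite (Rabs_minus_sym (fst p)) (Rabs_minus_sym (snd p)); lra. Qed.

Lemma dist1_tri p q r : dist1 p r <= dist1 p q + dist1 q r.
Proof.
unfold dist1.
pose proof (Rabs_triang (fst p - fst q) (fst q - fst r)).
pose proof (Rabs_triang (snd p - snd q) (snd q - snd r)).
replace (fst p - fst r) with ((fst p - fst q) + (fst q - fst r)) by ring.
replace (snd p - snd r) with ((snd p - snd q) + (snd q - snd r)) by ring.
lra.
Qed.

Lemma dist1_eq0 p q : dist1 p q = 0 -> p = q.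
Proof.
unfold dist1; destruct p as [a b], q as [c e]; simpl; intro H0.
pose proof (Rabs_pos (a - c)); pose proof (Rabs_pos (b - e)).
assert (E1 : Rabs (a - c) = 0) by lra.
assert (E2 : Rabs (b - e) = 0) by lra.
destruct (Req_dec (a - c) 0) as [Z1|Z1]; [|now apply Rabs_no_R0 in Z1].
destruct (Req_dec (b - e) 0) as [Z2|Z2]; [|now apply Rabs_no_R0 in Z2].
f_equal; lra.
Qed.

Lemma dist1_pos {p q} : p <> q -> 0 < dist1 p q.
Proof.
intro H; destruct (dist1_ge0 p q) as [h|h]; auto.
exfalso; apply H, dist1_eq0; auto.
Qed.

Lemma dist1_refl p : dist1 p p = 0.
Proof. unfold dist1; rewrite !Rminus_diag Rabs_R0; lra. Qed.

Definition rcont (f : R -> R) (t : R) : Prop :=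
  forall e, 0 < e -> exists del, 0 < del /\ forall t', Rabs (t' - t) < del -> Rabs (f t' - f t) < e.

Lemma cpt_rcont f t : continuity_pt f t -> rcont f t.
Proof.
intros H e He; destruct (H e He) as [del [Hd Hx]]; exists del; split; auto.
intros t' Ht'. destruct (Req_dec t' t) as [->|Hne].
- rewrite Rminus_diag Rabs_R0; auto.
- apply (Hx t'); split; [split; [exact I| auto] | exact Ht'].
Qed.

Lemma rcont_cpt f t : rcont f t -> continuity_pt f t.
Proof.
intros H e He; destruct (H e He) as [del [Hd Hx]]; exists del; split; auto.
intros t' [_ Ht']; apply Hx; exact Ht'.
Qed.

Definition ccont (g : R -> point) (t : R) : Prop :=
  forall e, 0 < e -> exists del, 0 < del /\ forall t', Rabs (t' - t) < del -> dist1 (g t') (g t) < e.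

Lemma ccont_of g t : rcont (fun s => fst (g s)) t -> rcont (fun s => snd (g s)) t -> ccont g t.
Proof.
intros H1 H2 e He.
destruct (H1 (e/2)) as [d1 [Hd1 K1]]; [lra|].
destruct (H2 (e/2)) as [d2 [Hd2 K2]]; [lra|].
exists (Rmin d1 d2); split; [apply Rmin_pos; auto|].
intros t' Ht'. unfold dist1.
pose proof (K1 t' (Rlt_le_trans _ _ _ Ht' (Rmin_l _ _))).
pose proof (K2 t' (Rlt_le_trans _ _ _ Ht' (Rmin_r _ _))).
lra.
Qed.

Lemma dlim_rcont f t l : derivable_pt_lim f t l -> rcont f t.
Proof.
intro H; apply cpt_rcont, derivable_continuous_pt; exists l; exact H.
Qed.

Lemma C1_ccont {g d} : has_C1_deriv g d -> forall t, ccont g t.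
Proof.
intros [H1 [H2 _]] t; apply ccont_of; eapply dlim_rcont; eauto.
Qed.

Lemma ccont_dist g t q : ccont g t -> rcont (fun s => dist1 (g s) q) t.
Proof.
intros H e He; destruct (H e He) as [del [Hd K]]; exists del; split; auto.
intros t' Ht'; pose proof (K t' Ht') as P0.
pose proof (dist1_tri (g t') (g t) q) as P1. pose proof (dist1_tri (g t) (g t') q) as P2.
rewrite (dist1_sym (g t) (g t')) in P2.
apply Rabs_def1; lra.
Qed.

Lemma min_pos F x y : x <= y -> (forall c, x <= c <= y -> continuity_pt F c) ->
  (forall c, x <= c <= y -> 0 < F c) -> exists eta, 0 < eta /\ forall c, x <= c <= y -> eta <= F c.
Proof.
intros Hxy Hc Hp; destruct (continuity_ab_min F x y Hxy Hc) as [mx [Hm Hmx]].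
exists (F mx); split; auto.
Qed.

Lemma curve_away g x y q : (forall t, ccont g t) ->
  (forall t, x <= t <= y -> g t <> q) ->
  exists eta, 0 < eta /\ forall t, x <= t <= y -> eta <= dist1 (g t) q.
Proof.
intros Hg Hne.
destruct (Rle_dec x y) as [Hxy|Hxy].
- apply min_pos; auto.
  + intros c _; apply rcont_cpt, ccont_dist, Hg.
  + intros c Hc; apply dist1_pos, Hne; auto.
- exists 1; split; [lra|]; intros t Ht; lra.
Qed.

Lemma inv_cont c : (forall t, ccont c t) -> injective_on (fun t => 0 <= t <= 1) c ->
  forall s0, 0 <= s0 <= 1 -> forall del, 0 < del ->
  exists eta, 0 < eta /\ forall s, 0 <= s <= 1 -> dist1 (c s) (c s0) < eta -> Rabs (s - s0) < del.
Proof.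
intros Hc Hi s0 Hs0 del Hd.
destruct (curve_away c 0 (s0 - del) (c s0) Hc) as [e1 [He1 K1]].
{ intros t Ht E. apply Hi in E; [lra| lra | lra]. }
destruct (curve_away c (s0 + del) 1 (c s0) Hc) as [e2 [He2 K2]].
{ intros t Ht E. apply Hi in E; [lra| lra | lra]. }
exists (Rmin e1 e2); split; [apply Rmin_pos; auto|].
intros s Hs Hlt.
destruct (Rlt_dec (Rabs (s - s0)) del) as [ok|nok]; auto. exfalso.
apply Rnot_lt_le in nok.
destruct (Rle_dec s s0) as [Hle|Hle].
- rewrite Rabs_left1 in nok; [|lra].
  pose proof (K1 s ltac:(lra)). pose proof (Rmin_l e1 e2). lra.
- rewrite Rabs_right in nok; [|lra].
  pose proof (K2 s ltac:(lra)). pose proof (Rmin_r e1 e2). lra.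
Qed.

Definition rel_cont (f : R -> R) (x y : R) : Prop :=
  forall t, x <= t <= y -> forall e, 0 < e -> exists del, 0 < del /\
    forall t', x <= t' <= y -> Rabs (t' - t) < del -> Rabs (f t' - f t) < e.

Lemma lub_approx (E : R -> Prop) z del : is_lub E z -> 0 < del ->
  exists t, E t /\ z - del < t.
Proof.
intros [Hub Hl] Hd.
apply NNPP; intro N.
assert (Hb : is_upper_bound E (z - del)).
{ intros t Et. apply Rnot_lt_le; intro L; apply N; exists t; split; auto. }
pose proof (Hl _ Hb). lra.
Qed.

Lemma ivt_rel f x y c : x <= y -> rel_cont f x y -> f x <= c <= f y ->
  exists z, x <= z <= y /\ f z = c.
Proof.
intros Hxy Hf Hc.
set (E := fun t => x <= t <= y /\ f t <= c).
assert (Hb : bound E) by (exists y; intros t [Ht _]; lra).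
assert (Hne : exists t, E t) by (exists x; split; [lra | lra]).
destruct (completeness E Hb Hne) as [z Hz].
assert (Hxz : x <= z) by (apply (proj1 Hz); split; [lra|lra]).
assert (Hzy : z <= y) by (apply (proj2 Hz); intros t [Ht _]; lra).
exists z; split; [lra|].
destruct (Rtotal_order (f z) c) as [Hlt|[Heq|Hgt]]; auto; exfalso.
-
  destruct (Req_dec z y) as [->|Hzy']; [lra|].
  destruct (Hf z (conj Hxz Hzy) (c - f z)) as [d [Hd K]]; [lra|].
  set (t := Rmin (z + d/2) y).
  assert (Ht1 : z < t) by (unfold t; apply Rmin_glb_lt; lra).
  assert (Ht2 : t <= y) by apply Rmin_r.
  assert (Ht3 : t <= z + d/2) by apply Rmin_l.
  assert (Et : E t).
  { split; [lra|]. assert (Rabs (t - z) < d) by (rewrite Rabs_right; lra).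
    pose proof (K t ltac:(lra) H) as Kt.
    apply Rabs_def2 in Kt. lra. }
  pose proof (proj1 Hz t Et). lra.
- destruct (Hf z (conj Hxz Hzy) (f z - c)) as [d [Hd K]]; [lra|].
  destruct (lub_approx _ _ _ Hz Hd) as [t [[Ht Ef] Htz]].
  assert (t <= z) by (apply (proj1 Hz); split; auto).
  assert (Rabs (t - z) < d) by (rewrite Rabs_left1; lra).
  pose proof (K t Ht H0) as Kt.
  apply Rabs_def2 in Kt. lra.
Qed.

Lemma ivt_rel2 f x y c : x <= y -> rel_cont f x y ->
  Rmin (f x) (f y) <= c <= Rmax (f x) (f y) ->
  exists z, x <= z <= y /\ f z = c.
Proof.
intros Hxy Hf Hc.
destruct (Rle_dec (f x) (f y)) as [H|H].
- rewrite Rmin_left in Hc; auto. rewrite Rmax_right in Hc; auto. apply ivt_rel; auto.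
- rewrite Rmin_right in Hc; [|lra]. rewrite Rmax_left in Hc; [|lra].
  destruct (ivt_rel (fun t => - f t) x y (- c)) as [z [Hz E]]; auto; [|lra|].
  + intros t Ht e He; destruct (Hf t Ht e He) as [d [Hd K]]; exists d; split; auto.
    intros t' H1 H2; pose proof (K t' H1 H2). rewrite <- Rabs_Ropp; 
    replace (- (- f t' - - f t)) with (f t' - f t) by ring; auto.
  + exists z; split; auto; lra.
Qed.

Lemma fin_min (I : finType) (P : I -> R -> Prop) :
  (forall i e e', 0 < e' <= e -> P i e -> P i e') ->
  (forall i, exists e, 0 < e /\ P i e) -> exists e, 0 < e /\ forall i, P i e.
Proof.
intros Hmon Hex.
assert (L : forall l : seq I, exists e, 0 < e /\ forall i, i \in l -> P i e).
{ elim=> [|a l [e [He K]]].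
  - exists 1; split; [lra|]; intros i Hi; by rewrite in_nil in Hi.
  - destruct (Hex a) as [ea [Hea Ka]].
    exists (Rmin e ea); split; [apply Rmin_pos; auto|].
    intros i; rewrite in_cons; case/orP => [/eqP ->|Hi].
    + apply (Hmon a ea); auto; split; [apply Rmin_pos; auto| apply Rmin_r].
    + apply (Hmon i e); auto; split; [apply Rmin_pos; auto| apply Rmin_l]. }
destruct (L (enum I)) as [e [He K]]; exists e; split; auto.
intro i; apply K; by rewrite mem_enum.
Qed.

Section Tracks.
Variables (V : finType) (m : nat) (th0 : R) (th : V -> R) (tr dtr : 'I_m -> R -> point).
Hypothesis Htr : tracks_ok th0 th tr dtr.

Lemma tr_cont i t : ccont (tr i) t.
Proof. destruct Htr as [Hs _]. destruct (Hs i) as [Hd _]. eapply C1_ccont; eauto. Qed.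

Lemma tr_inj i : injective_on (fun t => 0 <= t <= 1) (tr i).
Proof. destruct Htr as [_ [Hi _]]. apply Hi. Qed.

Lemma vpos_sq u : sqnorm (vpos th0 th u) = 1.
Proof. unfold sqnorm, vpos; simpl. pose proof (sin2_cos2 (th0 - th u)). unfold Rsqr in H. lra. Qed.

Lemma vertex_sq {p} : is_vertex_point th0 th p -> sqnorm p = 1.
Proof. intros [w <-]; apply vpos_sq. Qed.

Definition intX (X : 'I_m) (p : point) : Prop := exists s, 0 < s < 1 /\ tr X s = p.

Definition cand (p : point) : Prop := is_vertex_point th0 th p \/ exists i, is_endpoint (tr i) p.

Lemma int_sq {X p} : intX X p -> sqnorm p < 1.
Proof. intros [s [Hs <-]]. destruct Htr as [_ [_ [_ [H _]]]]. apply H; auto. Qed.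

Lemma int_not_end {X p} : intX X p -> ~ is_endpoint (tr X) p.
Proof.
intros [s [Hs <-]] [E|E]; apply tr_inj in E; try lra.
Qed.

Lemma int_img {X p} : intX X p -> img (tr X) p.
Proof. intros [s [Hs E]]; exists s; split; [lra|auto]. Qed.

Lemma end_img {X p} : is_endpoint (tr X) p -> img (tr X) p.
Proof. intros [E|E]; [exists 0|exists 1]; split; auto; lra. Qed.

Lemma int_unique {X j p} : intX X p -> img (tr j) p -> j = X.
Proof.
intros HX Hj. destruct (eqVneq j X) as [->|Hne]; auto.
exfalso. destruct Htr as [_ [_ [Hd _]]].
assert (j <> X) by (intro E; rewrite E eqxx in Hne; discriminate).
destruct (Hd j X H p Hj (int_img HX)) as [_ HE].
exact (int_not_end HX HE).
Qed.

Lemma cand_not_int {X p} : cand p -> intX X p -> False.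
Proof.
intros [Hv|[i Hi]] HX.
- pose proof (vertex_sq Hv); pose proof (int_sq HX); lra.
- pose proof (int_unique HX (end_img Hi)); subst i.
  exact (int_not_end HX Hi).
Qed.

Definition goodc (g : R -> point) : Prop :=
  (forall t, ccont g t) /\ injective_on (fun t => 0 <= t <= 1) g /\
  (forall t, 0 <= t <= 1 -> in_tracks tr (g t)) /\ cand (g 0) /\ cand (g 1).

Lemma goodc_rev {g} : goodc g -> goodc (fun t => g (1 - t)).
Proof.
intros [Hc [Hi [Hin [H0 H1]]]]; split; [|split; [|split; [|split]]].
- intros t e He. destruct (Hc (1 - t) e He) as [d [Hd K]]; exists d; split; auto.
  intros t' Ht'; apply K. replace (1 - t' - (1 - t)) with (- (t' - t)) by ring.
  rewrite Rabs_Ropp; auto.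
- intros s t Hs Ht E. apply Hi in E; lra.
- intros t Ht; apply Hin; lra.
- rewrite Rminus_0_r; auto.
- rewrite Rminus_diag; auto.
Qed.

Lemma local_int {g X t} : goodc g -> 0 <= t <= 1 -> intX X (g t) ->
  exists eps, 0 < eps /\ forall t', 0 <= t' <= 1 -> Rabs (t' - t) < eps -> intX X (g t').
Proof.
intros [Hc [Hi [Hin _]]] Ht HX.
set (q := g t).
destruct (fin_min _ (fun j e => j <> X -> forall r, 0 <= r <= 1 -> e <= dist1 (tr j r) q)) as [e1 [He1 K1]].
{ intros j e e' He' K Hj r Hr; pose proof (K Hj r Hr); lra. }
{ intro j. destruct (eqVneq j X) as [->|Hne].
  - exists 1; split; [lra|]; intro C; congruence.
  - destruct (curve_away (tr j) 0 1 q (tr_cont j)) as [e [He K]].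
    + intros r Hr E. assert (j = X) by (apply (int_unique HX); exists r; auto).
      subst j; by rewrite eqxx in Hne.
    + exists e; split; auto. }
assert (N0 : tr X 0 <> q) by (intro E; apply (int_not_end HX); left; auto).
assert (N1 : tr X 1 <> q) by (intro E; apply (int_not_end HX); right; auto).
pose proof (dist1_pos N0) as P0. pose proof (dist1_pos N1) as P1.
set (e := Rmin e1 (Rmin (dist1 (tr X 0) q) (dist1 (tr X 1) q))).
assert (He : 0 < e) by (apply Rmin_pos; auto; apply Rmin_pos; auto).
assert (Le1 : e <= e1) by apply Rmin_l.
assert (Le2 : e <= dist1 (tr X 0) q) by (eapply Rle_trans; [apply Rmin_r| apply Rmin_l]).
assert (Le3 : e <= dist1 (tr X 1) q) by (eapply Rle_trans; [apply Rmin_r| apply Rmin_r]).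
destruct (Hc t e He) as [d [Hd K]].
exists d; split; auto. intros t' Ht' Hd'.
pose proof (K t' Hd') as Kt. fold q in Kt.
destruct (Hin t' Ht') as [j [r [Hr E]]].
destruct (eqVneq j X) as [->|Hne].
- exists r; split; [|auto].
  destruct (Req_dec r 0) as [->|R0]; [rewrite <- E in Kt; lra|].
  destruct (Req_dec r 1) as [->|R1]; [rewrite <- E in Kt; lra|]. lra.
- exfalso. assert (j <> X) by (intro C; subst; by rewrite eqxx in Hne).
  pose proof (K1 j H r Hr). rewrite E in H0. lra.
Qed.

Lemma TL_left {g X t0} : goodc g -> 0 <= t0 <= 1 -> intX X (g t0) ->
  exists a, 0 <= a < t0 /\ (forall t, a < t <= t0 -> intX X (g t)) /\
    (g a = tr X 0 \/ g a = tr X 1).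
Proof.
intros Hg Ht0 HX.
pose proof Hg as [Hc [Hi [Hin [H0 H1]]]].
set (E := fun t => 0 <= t <= t0 /\ ~ intX X (g t)).
assert (Hb : bound E) by (exists t0; intros t [Ht _]; lra).
assert (Hne : exists t, E t).
{ exists 0; split; [lra|]. intro C; exact (cand_not_int H0 C). }
destruct (completeness E Hb Hne) as [a Ha].
assert (Ha0 : 0 <= a) by (apply (proj1 Ha); split; [lra|]; intro C; exact (cand_not_int H0 C)).
assert (Hat : a <= t0) by (apply (proj2 Ha); intros t [Ht _]; lra).
assert (Hint : forall t, a < t <= t0 -> intX X (g t)).
{ intros t Ht. apply NNPP; intro N. assert (E t) by (split; [lra|auto]).
  pose proof (proj1 Ha t H). lra. }
assert (Hna : ~ intX X (g a)).
{ intro C. destruct (local_int Hg (conj Ha0 (Rle_trans _ _ _ Hat (proj2 Ht0))) C) as [e [He K]].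
  destruct (lub_approx _ _ _ Ha He) as [t [[Ht Nt] Hlt]].
  assert (t <= a) by (apply (proj1 Ha); split; auto).
  apply Nt, K; [lra|]. rewrite Rabs_left1; lra. }
assert (Hlt : a < t0) by (destruct Hat as [?|<-]; auto; contradiction).
exists a; split; [lra|]; split; auto.
assert (Himg : exists s, 0 <= s <= 1 /\ tr X s = g a).
{ apply NNPP; intro N.
  destruct (curve_away (tr X) 0 1 (g a) (tr_cont X)) as [e [He K]].
  { intros s Hs E'. apply N; exists s; auto. }
  destruct (Hc a e He) as [d [Hd Kd]].
  set (t := Rmin (a + d/2) t0).
  assert (a < t) by (unfold t; apply Rmin_glb_lt; lra).
  assert (t <= t0) by apply Rmin_r.
  assert (t <= a + d/2) by apply Rmin_l.
  destruct (Hint t ltac:(lra)) as [s [Hs Es]].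
  pose proof (K s ltac:(lra)) as Q1. rewrite Es in Q1.
  assert (Q2 : Rabs (t - a) < d) by (rewrite Rabs_right; lra).
  pose proof (Kd t Q2). lra. }
destruct Himg as [s [Hs Es]].
destruct (Req_dec s 0) as [->|S0]; [left; auto|].
destruct (Req_dec s 1) as [->|S1]; [right; auto|].
exfalso; apply Hna; exists s; split; [lra|auto].
Qed.

Lemma TL_right {g X t0} : goodc g -> 0 <= t0 <= 1 -> intX X (g t0) ->
  exists b, t0 < b <= 1 /\ (forall t, t0 <= t < b -> intX X (g t)) /\
    (g b = tr X 0 \/ g b = tr X 1).
Proof.
intros Hg Ht0 HX.
destruct (@TL_left (fun t => g (1 - t)) X (1 - t0)) as [a [Ha [K E]]].
- apply goodc_rev; auto.
- lra.
- rewrite (_ : 1 - (1 - t0) = t0); [auto|ring].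
- exists (1 - a); split; [lra|]; split; auto.
  intros t Ht. rewrite (_ : t = 1 - (1 - t)); [|ring]. apply K; lra.
Qed.

Lemma TL {g X t0} : goodc g -> 0 <= t0 <= 1 -> intX X (g t0) ->
  exists a b, 0 <= a < t0 /\ t0 < b <= 1 /\ (forall t, a < t < b -> intX X (g t)) /\
    ((g a = tr X 0 /\ g b = tr X 1) \/ (g a = tr X 1 /\ g b = tr X 0)) /\
    (forall s, 0 <= s <= 1 -> exists t, a <= t <= b /\ g t = tr X s).
Proof.
intros Hg Ht0 HX.
destruct (TL_left Hg Ht0 HX) as [a [Ha [Ka Ea]]].
destruct (TL_right Hg Ht0 HX) as [b [Hb [Kb Eb]]].
pose proof Hg as [Hc [Hi _]].
assert (Hab : g a <> g b) by (intro E; apply Hi in E; lra).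
assert (Kab : forall t, a < t < b -> intX X (g t)).
{ intros t Ht; destruct (Rle_dec t t0); [apply Ka|apply Kb]; lra. }
exists a, b; split; [lra|]; split; [lra|]; split; auto.
assert (Hends : (g a = tr X 0 /\ g b = tr X 1) \/ (g a = tr X 1 /\ g b = tr X 0)).
{ destruct Ea as [Ea|Ea], Eb as [Eb|Eb]; try (exfalso; apply Hab; congruence); auto. }
split; auto.
assert (Hex : forall t, a <= t <= b -> exists s, 0 <= s <= 1 /\ g t = tr X s).
{ intros t Ht. destruct (Req_dec t a) as [->|Na].
  - destruct Ea as [Ea|Ea]; [exists 0|exists 1]; split; auto; lra.
  - destruct (Req_dec t b) as [->|Nb].
    + destruct Eb as [Eb|Eb]; [exists 0|exists 1]; split; auto; lra.
    + destruct (Kab t ltac:(lra)) as [s [Hs Es]]; exists s; split; auto; lra. }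
set (phi := fun t => epsilon (inhabits 0) (fun s => 0 <= s <= 1 /\ g t = tr X s)).
assert (Hphi : forall t, a <= t <= b -> 0 <= phi t <= 1 /\ g t = tr X (phi t)).
{ intros t Ht. unfold phi. apply (epsilon_spec (inhabits 0) (fun s => 0 <= s <= 1 /\ g t = tr X s)).
  apply Hex; auto. }
assert (Hcont : rel_cont phi a b).
{ intros t Ht e He.
  destruct (Hphi t Ht) as [Pt Et].
  destruct (inv_cont (tr X) (tr_cont X) (tr_inj X) (phi t) Pt e He) as [eta [Heta K]].
  destruct (Hc t eta Heta) as [d [Hd Kd]].
  exists d; split; auto. intros t' Ht' Hdt.
  destruct (Hphi t' Ht') as [Pt' Et'].
  apply K; auto. rewrite <- Et, <- Et'. apply Kd; auto. }
assert (Pa : phi a = 0 \/ phi a = 1).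
{ destruct (Hphi a ltac:(lra)) as [Pa Ea'].
  destruct Ea as [Ea|Ea]; rewrite Ea in Ea'; apply tr_inj in Ea'; try lra. }
assert (Pb : phi b = 0 /\ phi a = 1 \/ phi b = 1 /\ phi a = 0).
{ destruct (Hphi b ltac:(lra)) as [Pb Eb'].
  destruct (Hphi a ltac:(lra)) as [Pa' Ea'].
  destruct Hends as [[E1 E2]|[E1 E2]].
  - rewrite E2 in Eb'; rewrite E1 in Ea'. apply tr_inj in Eb'; apply tr_inj in Ea'; try lra.
  - rewrite E2 in Eb'; rewrite E1 in Ea'. apply tr_inj in Eb'; apply tr_inj in Ea'; try lra. }
intros s Hs.
destruct (ivt_rel2 phi a b s ltac:(lra) Hcont) as [z [Hz Ez]].
{ destruct Pb as [[E1 E2]|[E1 E2]]; rewrite E1 E2.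
  - rewrite Rmin_right; [|lra]; rewrite Rmax_left; lra.
  - rewrite Rmin_left; [|lra]; rewrite Rmax_right; lra. }
exists z; split; auto. rewrite <- Ez. apply Hphi; auto.
Qed.

Lemma avoid_pt g c tau : injective_on (fun t => 0 <= t <= 1) g ->
  exists e, 0 < e /\ forall t, 0 <= t <= 1 -> 0 < Rabs (t - tau) < e -> g t <> c.
Proof.
intro Hi.
destruct (classic (exists t1, 0 <= t1 <= 1 /\ t1 <> tau /\ g t1 = c)) as [[t1 [H1 [H2 H3]]]|N].
- exists (Rabs (t1 - tau)); split; [apply Rabs_pos_lt; lra|].
  intros t Ht [Hp Hlt] E. rewrite <- H3 in E. apply Hi in E; auto. subst; lra.
- exists 1; split; [lra|]. intros t Ht [Hp _] E. apply N; exists t; split; auto; split; auto.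
  intro C; subst; rewrite Rminus_diag Rabs_R0 in Hp; lra.
Qed.

Lemma avoid_cand g tau : injective_on (fun t => 0 <= t <= 1) g ->
  exists e, 0 < e /\ forall t, 0 <= t <= 1 -> 0 < Rabs (t - tau) < e -> ~ cand (g t).
Proof.
intro Hi.
destruct (fin_min V (fun w e => forall t, 0 <= t <= 1 -> 0 < Rabs (t - tau) < e -> g t <> vpos th0 th w)) as [e1 [He1 K1]].
{ intros w e e' He' K t Ht Hr; apply K; auto; lra. }
{ intro w; apply avoid_pt; auto. }
destruct (fin_min 'I_m (fun i e => forall t, 0 <= t <= 1 -> 0 < Rabs (t - tau) < e -> g t <> tr i 0 /\ g t <> tr i 1)) as [e2 [He2 K2]].
{ intros w e e' He' K t Ht Hr; apply K; auto; lra. }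
{ intro i. destruct (avoid_pt g (tr i 0) tau Hi) as [a [Ha Ka]].
  destruct (avoid_pt g (tr i 1) tau Hi) as [b [Hb Kb]].
  exists (Rmin a b); split; [apply Rmin_pos; auto|].
  intros t Ht Hr; pose proof (Rmin_l a b); pose proof (Rmin_r a b); split; [apply Ka|apply Kb]; auto; lra. }
exists (Rmin e1 e2); split; [apply Rmin_pos; auto|].
intros t Ht Hr; pose proof (Rmin_l e1 e2); pose proof (Rmin_r e1 e2).
intros [[w Hw]|[i [Hi0|Hi1]]].
- apply (K1 w t Ht ltac:(lra)); auto.
- apply (proj1 (K2 i t Ht ltac:(lra))); auto.
- apply (proj2 (K2 i t Ht ltac:(lra))); auto.
Qed.

Lemma cand_or_int g t : goodc g -> 0 <= t <= 1 -> cand (g t) \/ exists X, intX X (g t).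
Proof.
intros [_ [_ [Hin _]]] Ht. destruct (Hin t Ht) as [j [r [Hr E]]].
destruct (Req_dec r 0) as [->|R0]; [left; right; exists j; left; auto|].
destruct (Req_dec r 1) as [->|R1]; [left; right; exists j; right; auto|].
right; exists j, r; split; [lra|auto].
Qed.

Lemma FT_right g tau : goodc g -> 0 <= tau < 1 -> cand (g tau) ->
  exists X b, tau < b <= 1 /\ (forall t, tau < t < b -> intX X (g t)) /\
    is_endpoint (tr X) (g tau) /\ is_endpoint (tr X) (g b) /\ g tau <> g b /\
    (forall s, 0 <= s <= 1 -> exists t, tau <= t <= b /\ g t = tr X s).
Proof.
intros Hg Ht Hc.
pose proof Hg as [_ [Hi _]].
destruct (avoid_cand g tau Hi) as [e [He K]].
set (t1 := tau + Rmin e (1 - tau) / 2).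
assert (Q1 : 0 < Rmin e (1 - tau)) by (apply Rmin_pos; lra).
pose proof (Rmin_l e (1 - tau)); pose proof (Rmin_r e (1 - tau)).
assert (Ht1 : 0 <= t1 <= 1) by (unfold t1; lra).
assert (Nc : ~ cand (g t1)) by (apply K; auto; unfold t1; rewrite Rabs_right; lra).
destruct (cand_or_int g t1 Hg Ht1) as [C|[X HX]]; [contradiction|].
destruct (TL Hg Ht1 HX) as [a [b [Ha [Hb [Kab [Ends Cov]]]]]].
assert (Ea : a = tau).
{ destruct (Rtotal_order a tau) as [L|[Eq|G]]; auto; exfalso.
  - apply (cand_not_int Hc (X := X)); apply Kab; unfold t1 in *; lra.
  - assert (cand (g a)) by (right; exists X; destruct Ends as [[E1 _]|[E1 _]]; [left|right]; auto).
    apply (K a); auto; [lra| rewrite Rabs_right; unfold t1 in *; lra]. }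
subst a. exists X, b; split; [lra|]; split; [intros t Ht'; apply Kab; lra|].
split; [destruct Ends as [[E1 _]|[E1 _]]; [left|right]; auto|].
split; [destruct Ends as [[_ E1]|[_ E1]]; [right|left]; auto|].
split; [intro E; apply Hi in E; lra|auto].
Qed.

Lemma FT_left g tau : goodc g -> 0 < tau <= 1 -> cand (g tau) ->
  exists X a, 0 <= a < tau /\ (forall t, a < t < tau -> intX X (g t)) /\
    is_endpoint (tr X) (g tau) /\ is_endpoint (tr X) (g a) /\ g tau <> g a /\
    (forall s, 0 <= s <= 1 -> exists t, a <= t <= tau /\ g t = tr X s).
Proof.
intros Hg Ht Hc.
destruct (FT_right (fun t => g (1 - t)) (1 - tau) (goodc_rev Hg)) as [X [b [Hb [K [E1 [E2 [Ne Cov]]]]]]].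
{ lra. }
{ rewrite (_ : 1 - (1 - tau) = tau); [auto|ring]. }
rewrite (_ : 1 - (1 - tau) = tau) in E1 Ne; [|ring].
exists X, (1 - b); split; [lra|]; split.
{ intros t Ht'. rewrite (_ : t = 1 - (1 - t)); [|ring]. apply K; lra. }
split; auto. split; auto. split; auto.
intros s Hs; destruct (Cov s Hs) as [t [Ht' Et]]; exists (1 - t); split; [lra|auto].
Qed.


Lemma dlim_bound f x l : derivable_pt_lim f x l -> forall eps, 0 < eps ->
  exists del, 0 < del /\ forall y, Rabs (y - x) < del -> Rabs (f y - f x - (y - x) * l) <= eps * Rabs (y - x).
Proof.
intros H eps He. destruct (H eps He) as [[del Hd] K]; exists del; split; auto.
intros y Hy. destruct (Req_dec y x) as [->|Ne].
- rewrite !Rminus_diag Rabs_R0. rewrite (_ : 0 - 0 * l = 0); [|ring]. rewrite Rabs_R0; lra.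
- assert (Hh : y - x <> 0) by lra.
  pose proof (K (y - x) Hh Hy) as Q. simpl in Q.
  rewrite (_ : x + (y - x) = y) in Q; [|ring].
  rewrite (_ : (f y - f x) / (y - x) - l = (f y - f x - (y - x) * l) / (y - x)) in Q; [|field; auto].
  unfold Rdiv in Q. rewrite Rabs_mult Rabs_inv in Q.
  pose proof (Rabs_pos_lt _ Hh) as P.
  apply Rmult_lt_compat_r with (r := Rabs (y - x)) in Q; auto.
  rewrite Rmult_assoc Rinv_l in Q; [|lra]. lra.
Qed.

Lemma cross_bound x1 x2 w1 w2 :
  Rabs (x1 * w2 - x2 * w1) <= (Rabs x1 + Rabs x2) * (Rabs w1 + Rabs w2).
Proof.
eapply Rle_trans; [apply Rabs_triang|]. rewrite Rabs_Ropp !Rabs_mult.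
pose proof (Rabs_pos x1); pose proof (Rabs_pos x2); pose proof (Rabs_pos w1); pose proof (Rabs_pos w2).
pose proof (Rmult_le_pos _ _ H H1); pose proof (Rmult_le_pos _ _ H0 H2).
set (a1 := Rabs x1) in *; set (a2 := Rabs x2) in *; set (b1 := Rabs w1) in *; set (b2 := Rabs w2) in *.
rewrite (_ : (a1 + a2) * (b1 + b2) = a1 * b2 + a2 * b1 + (a1 * b1 + a2 * b2)); [|ring]. nra.
Qed.

Lemma par_trans u w v : parallel u w -> parallel w v -> w <> (0,0) -> parallel u v.
Proof.
unfold parallel; destruct u as [u1 u2], w as [w1 w2], v as [v1 v2]; simpl; intros H1 H2 Hw.
assert (A1 : w1 * (u1 * v2 - u2 * v1) = 0).
{ rewrite (_ : w1 * (u1 * v2 - u2 * v1) = u1 * (w1 * v2 - w2 * v1) + v1 * (u1 * w2 - u2 * w1)); [|ring].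
  rewrite H1 H2; ring. }
assert (A2 : w2 * (u1 * v2 - u2 * v1) = 0).
{ rewrite (_ : w2 * (u1 * v2 - u2 * v1) = u2 * (w1 * v2 - w2 * v1) + v2 * (u1 * w2 - u2 * w1)); [|ring].
  rewrite H1 H2; ring. }
destruct (Req_dec w1 0) as [Z1|Z1].
- destruct (Req_dec w2 0) as [Z2|Z2]; [subst; contradiction|].
  apply Rmult_integral in A2; destruct A2; [contradiction|auto].
- apply Rmult_integral in A1; destruct A1; [contradiction|auto].
Qed.

Lemma par_sym u v : parallel u v -> parallel v u.
Proof. unfold parallel; lra. Qed.

Definition scale (k : R) (p : point) : point := (k * fst p, k * snd p).

Lemma par_scale_l k u v : parallel u v -> parallel (scale k u) v.
Proof. unfold parallel, scale; simpl; intro H. rewrite (_ : k * fst u * snd v - k * snd u * fst v = k * (fst u * snd v - snd u * fst v)); [|ring]. rewrite H; ring. Qed.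

Lemma PT f fd a c w e :
  derivable_pt_lim (fun s => fst (f s)) a (fst fd) ->
  derivable_pt_lim (fun s => snd (f s)) a (snd fd) ->
  derivable_pt_lim (fun s => fst (c s)) e (fst w) ->
  derivable_pt_lim (fun s => snd (c s)) e (snd w) ->
  (forall t, ccont c t) -> injective_on (fun t => 0 <= t <= 1) c -> 0 <= e <= 1 ->
  w <> (0,0) -> f a = c e ->
  (forall del, 0 < del -> exists t, 0 < Rabs (t - a) < del /\ exists r, 0 <= r <= 1 /\ f t = c r) ->
  parallel fd w.
Proof.
intros Hf1 Hf2 Hc1 Hc2 Hcc Hci He Hw Hfa Hnear.
unfold parallel. apply NNPP; intro HK.
set (K := fst fd * snd w - snd fd * fst w) in *.
assert (Kp : 0 < Rabs K) by (apply Rabs_pos_lt; auto).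
set (N := Rabs (fst w) + Rabs (snd w)).
assert (Np : 0 < N).
{ unfold N. destruct w as [w1 w2]; simpl.
  destruct (Req_dec w1 0) as [Z1|Z1].
  - destruct (Req_dec w2 0) as [Z2|Z2]; [subst; contradiction|].
    pose proof (Rabs_pos_lt _ Z2); pose proof (Rabs_pos w1); lra.
  - pose proof (Rabs_pos_lt _ Z1); pose proof (Rabs_pos w2); lra. }
set (F := Rabs (fst fd) + Rabs (snd fd)).
assert (Fp : 0 <= F) by (unfold F; pose proof (Rabs_pos (fst fd)); pose proof (Rabs_pos (snd fd)); lra).
set (e' := Rmin 1 (Rabs K / (8 * N))).
assert (e'p : 0 < e') by (apply Rmin_pos; [lra| apply Rdiv_lt_0_compat; lra]).
assert (e'1 : e' <= 1) by apply Rmin_l.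
assert (e'2 : e' <= Rabs K / (8 * N)) by apply Rmin_r.
set (ep := Rmin (N / 4) (Rabs K / (16 * (F + 2)))).
assert (epp : 0 < ep) by (apply Rmin_pos; [lra| apply Rdiv_lt_0_compat; lra]).
assert (ep1 : ep <= N / 4) by apply Rmin_l.
assert (ep2 : ep <= Rabs K / (16 * (F + 2))) by apply Rmin_r.
destruct (dlim_bound _ _ _ Hf1 e' e'p) as [d1 [Hd1 B1]].
destruct (dlim_bound _ _ _ Hf2 e' e'p) as [d2 [Hd2 B2]].
destruct (dlim_bound _ _ _ Hc1 ep epp) as [d3 [Hd3 B3]].
destruct (dlim_bound _ _ _ Hc2 ep epp) as [d4 [Hd4 B4]].
destruct (inv_cont c Hcc Hci e He (Rmin d3 d4) (Rmin_pos _ _ Hd3 Hd4)) as [eta [Heta Ki]].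
assert (Hfc : ccont f a) by (apply ccont_of; eapply dlim_rcont; eauto).
destruct (Hfc eta Heta) as [d5 [Hd5 K5]].
destruct (Hnear (Rmin d1 (Rmin d2 d5))) as [t [Ht [r [Hr Ef]]]].
{ apply Rmin_pos; auto; apply Rmin_pos; auto. }
pose proof (Rmin_l d1 (Rmin d2 d5)). pose proof (Rmin_r d1 (Rmin d2 d5)).
pose proof (Rmin_l d2 d5). pose proof (Rmin_r d2 d5).
pose proof (B1 t ltac:(lra)) as Q1. pose proof (B2 t ltac:(lra)) as Q2.
pose proof (K5 t ltac:(lra)) as Q5. rewrite Ef Hfa in Q5.
pose proof (Ki r Hr Q5) as Qr.
pose proof (Rmin_l d3 d4). pose proof (Rmin_r d3 d4).
pose proof (B3 r ltac:(lra)) as Q3. pose proof (B4 r ltac:(lra)) as Q4.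
rewrite <- Ef, <- Hfa in Q3, Q4.
set (h := t - a) in *. set (k := r - e) in *.
set (D1 := fst (f t) - fst (f a)) in *. set (D2 := snd (f t) - snd (f a)) in *.
assert (Ap : 0 < Rabs h) by lra.
assert (Kkp : 0 <= Rabs k) by apply Rabs_pos.
set (w1 := fst w) in *. set (w2 := snd w) in *.
set (f1 := fst fd) in *. set (f2 := snd fd) in *.
assert (W1 : 0 <= Rabs w1) by apply Rabs_pos. assert (W2 : 0 <= Rabs w2) by apply Rabs_pos.
assert (I2 : Rabs (D1 * w2 - D2 * w1) <= 2 * ep * Rabs k * N).
{ rewrite (_ : D1 * w2 - D2 * w1 = (D1 - k * w1) * w2 - (D2 - k * w2) * w1); [|ring].
  eapply Rle_trans; [apply cross_bound|]. fold N.
  assert (Rabs (D1 - k * w1) + Rabs (D2 - k * w2) <= 2 * ep * Rabs k) by (lra).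
  apply Rmult_le_compat_r with (r := N) in H5; [|lra]. lra. }
assert (I3 : Rabs k * N <= 2 * (Rabs D1 + Rabs D2)).
{ assert (T1 : Rabs k * Rabs w1 <= Rabs D1 + ep * Rabs k).
  { rewrite <- Rabs_mult.
    rewrite (_ : k * w1 = D1 - (D1 - k * w1)); [|ring].
    eapply Rle_trans; [apply Rabs_triang|]. rewrite Rabs_Ropp. lra. }
  assert (T2 : Rabs k * Rabs w2 <= Rabs D2 + ep * Rabs k).
  { rewrite <- Rabs_mult.
    rewrite (_ : k * w2 = D2 - (D2 - k * w2)); [|ring].
    eapply Rle_trans; [apply Rabs_triang|]. rewrite Rabs_Ropp. lra. }
  assert (T3 : ep * Rabs k <= N / 4 * Rabs k) by (apply Rmult_le_compat_r; auto).
  assert (T4 : Rabs k * N = Rabs k * Rabs w1 + Rabs k * Rabs w2) by (unfold N; ring).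
  assert (T5 : N / 4 * Rabs k = Rabs k * N * / 4) by (unfold Rdiv; ring).
  clearbody N. lra. }
assert (I4 : Rabs D1 + Rabs D2 <= Rabs h * F + 2 * e' * Rabs h).
{ assert (T1 : Rabs D1 <= Rabs h * Rabs f1 + e' * Rabs h).
  { rewrite (_ : D1 = (D1 - h * f1) + h * f1); [|ring].
    eapply Rle_trans; [apply Rabs_triang|]. rewrite Rabs_mult. unfold D1 in *. lra. }
  assert (T2 : Rabs D2 <= Rabs h * Rabs f2 + e' * Rabs h).
  { rewrite (_ : D2 = (D2 - h * f2) + h * f2); [|ring].
    eapply Rle_trans; [apply Rabs_triang|]. rewrite Rabs_mult. unfold D2 in *. lra. }
  unfold F. lra. }
assert (I1 : Rabs h * Rabs K <= Rabs (D1 * w2 - D2 * w1) + 2 * e' * Rabs h * N).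
{ rewrite <- Rabs_mult.
  rewrite (_ : h * K = (D1 * w2 - D2 * w1) + ((h * f1 - D1) * w2 - (h * f2 - D2) * w1)); [|unfold K; fold f1 f2 w1 w2; ring].
  eapply Rle_trans; [apply Rabs_triang|].
  pose proof (cross_bound (h * f1 - D1) (h * f2 - D2) w1 w2) as CB. fold N in CB.
  assert (Rabs (h * f1 - D1) + Rabs (h * f2 - D2) <= 2 * e' * Rabs h).
  { rewrite (Rabs_minus_sym (h * f1)) (Rabs_minus_sym (h * f2)).
    lra. }
  apply Rmult_le_compat_r with (r := N) in H5; [|lra]. lra. }
assert (C1 : 2 * ep * Rabs k * N <= 4 * ep * (Rabs h * F + 2 * e' * Rabs h)).
{ assert (2 * ep * (Rabs k * N) <= 2 * ep * (2 * (Rabs D1 + Rabs D2))) by (apply Rmult_le_compat_l; lra).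
  assert (2 * ep * (2 * (Rabs D1 + Rabs D2)) <= 2 * ep * (2 * (Rabs h * F + 2 * e' * Rabs h))) by (apply Rmult_le_compat_l; lra).
  lra. }
assert (C2 : Rabs h * Rabs K <= Rabs h * (4 * ep * (F + 2 * e') + 2 * e' * N)) by lra.
apply Rmult_le_reg_l in C2; auto.
assert (C3 : ep * (F + 2) <= Rabs K / 16).
{ apply Rmult_le_compat_r with (r := F + 2) in ep2; [|lra].
  rewrite (_ : Rabs K / (16 * (F + 2)) * (F + 2) = Rabs K / 16) in ep2; [auto|field; lra]. }
assert (C4 : e' * N <= Rabs K / 8).
{ apply Rmult_le_compat_r with (r := N) in e'2; [|lra].
  rewrite (_ : Rabs K / (8 * N) * N = Rabs K / 8) in e'2; [auto|field; lra]. }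
assert (C5 : ep * (F + 2 * e') <= ep * (F + 2)) by (apply Rmult_le_compat_l; lra).
lra.
Qed.

Variable adj : rel V.
Variable S : {set V}.
Hypothesis Hdr : draws th0 th tr dtr adj.

Definition ec u v g := edge_curve th0 th tr u v g.
Definition sec g := exists u v, u \in S /\ v \in S /\ ec u v g.
Definition rev (g : R -> point) := fun t => g (1 - t).
Definition scurve g := sec g \/ sec (rev g).

Lemma rev_rev g : rev (rev g) = g.
Proof. unfold rev; apply functional_extensionality; intro t; f_equal; ring. Qed.

Lemma ec_good u v g : ec u v g -> goodc g.
Proof.
intros Hec. pose proof Hec as [[d Hs] [Hi0 [Hi1 [E0 [E1 [Hin Hnv]]]]]].
split; [apply (C1_ccont (proj1 Hs))|].
split; [|split; [|split]].
- intros s t Hs' Ht' E.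
  destruct (Req_dec s 1) as [S1|S1]; destruct (Req_dec t 1) as [T1|T1].
  + lra.
  + destruct (Req_dec t 0) as [T0|T0].
    * exfalso. destruct Hdr as [_ [Hnl _]]. apply (Hnl u g).
      subst s t. refine (conj (ex_intro _ d Hs) (conj Hi0 (conj Hi1 (conj E0 (conj _ (conj Hin Hnv)))))).
      rewrite E; exact E0.
    * apply Hi1; auto; lra.
  + destruct (Req_dec s 0) as [S0|S0].
    * exfalso. destruct Hdr as [_ [Hnl _]]. apply (Hnl u g).
      subst s t. refine (conj (ex_intro _ d Hs) (conj Hi0 (conj Hi1 (conj E0 (conj _ (conj Hin Hnv)))))).
      rewrite <- E; exact E0.
    * apply Hi1; auto; lra.
  + apply Hi0; auto; lra.
- intros t Ht. apply Hin. exists t; split; auto.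
- left; exists u; auto.
- left; exists v; auto.
Qed.

Lemma ec_nv u v g t : ec u v g -> 0 < t < 1 -> ~ is_vertex_point th0 th (g t).
Proof. intros [_ [_ [_ [_ [_ [_ H]]]]]] Ht; apply H; auto. Qed.

Lemma scurve_rev g : scurve g -> scurve (rev g).
Proof. intros [H|H]; [right; rewrite rev_rev; auto| left; auto]. Qed.

Lemma sec_good g : sec g -> goodc g.
Proof. intros [u [v [_ [_ H]]]]; eapply ec_good; eauto. Qed.

Lemma scurve_good g : scurve g -> goodc g.
Proof.
intros [H|H]; [apply sec_good; auto|].
rewrite <- (rev_rev g). apply goodc_rev, sec_good; auto.
Qed.

Lemma scurve_nv g t : scurve g -> 0 < t < 1 -> ~ is_vertex_point th0 th (g t).
Proof.
intros [[u [v [_ [_ H]]]]|[u [v [_ [_ H]]]]] Ht.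
- eapply ec_nv; eauto.
- rewrite (_ : g t = rev g (1 - t)); [|unfold rev; f_equal; ring].
  eapply ec_nv; eauto; lra.
Qed.

Lemma scurve_end g : scurve g ->
  (exists u, u \in S /\ g 0 = vpos th0 th u) /\ (exists u, u \in S /\ g 1 = vpos th0 th u).
Proof.
intros [[u [v [Hu [Hv H]]]]|[u [v [Hu [Hv H]]]]].
- destruct H as [_ [_ [_ [E0 [E1 _]]]]]; split; [exists u|exists v]; auto.
- destruct H as [_ [_ [_ [E0 [E1 _]]]]]; unfold rev in E0, E1.
  rewrite Rminus_0_r in E0; rewrite Rminus_diag in E1.
  split; [exists v|exists u]; auto.
Qed.

Definition remaining X := exists g, scurve g /\ exists t, 0 <= t <= 1 /\ intX X (g t).

Definition Bpt p := (exists u, u \in S /\ p = vpos th0 th u) \/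
  (sqnorm p < 1 /\ exists X1 X2 X3, X1 <> X2 /\ X1 <> X3 /\ X2 <> X3 /\
     remaining X1 /\ remaining X2 /\ remaining X3 /\
     is_endpoint (tr X1) p /\ is_endpoint (tr X2) p /\ is_endpoint (tr X3) p).

Lemma Bpt_cand p : Bpt p -> cand p.
Proof.
intros [[u [_ ->]]|[_ [X1 [_ [_ [_ [_ [_ [_ [_ [_ [H _]]]]]]]]]]]].
- left; exists u; auto.
- right; exists X1; auto.
Qed.

Lemma end_junction X p : is_endpoint (tr X) p -> sqnorm p < 1 -> is_junction tr dtr p.
Proof.
intros He Hs. destruct Htr as [_ [_ [_ [_ H]]]].
destruct (H X p He) as [Hv|Hj]; auto.
pose proof (vertex_sq Hv); lra.
Qed.

Definition sub g a b := scurve g /\ (0 <= a /\ a < b /\ b <= 1) /\ Bpt (g a) /\ Bpt (g b) /\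
  forall t, a < t < b -> ~ Bpt (g t).

Lemma sub_rev g a b : sub g a b -> sub (rev g) (1 - b) (1 - a).
Proof.
intros [Hs [Hab [Ha [Hb K]]]]; split; [apply scurve_rev; auto|].
unfold rev; split; [lra|].
rewrite (_ : 1 - (1 - b) = b); [|ring]. rewrite (_ : 1 - (1 - a) = a); [|ring].
split; auto; split; auto. intros t Ht; apply K; lra.
Qed.

Lemma last_pt (P : R -> Prop) x y : x <= y -> P x ->
  (forall t, x <= t <= y -> exists e, 0 < e /\ forall t', x <= t' <= y -> 0 < Rabs (t' - t) < e -> ~ P t') ->
  exists a, x <= a <= y /\ P a /\ forall t, a < t <= y -> ~ P t.
Proof.
intros Hxy Px Iso.
set (E := fun t => x <= t <= y /\ P t).
assert (Hb : bound E) by (exists y; intros t [Ht _]; lra).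
assert (Hne : exists t, E t) by (exists x; split; [lra|auto]).
destruct (completeness E Hb Hne) as [a Ha].
assert (Hxa : x <= a) by (apply (proj1 Ha); split; [lra|auto]).
assert (Hay : a <= y) by (apply (proj2 Ha); intros t [Ht _]; lra).
exists a; split; [lra|]; split.
- destruct (Iso a (conj Hxa Hay)) as [e [He K]].
  destruct (lub_approx _ _ _ Ha He) as [t [[Ht Pt] Hlt]].
  assert (t <= a) by (apply (proj1 Ha); split; auto).
  destruct (Req_dec t a) as [<-|Ne]; auto.
  exfalso; apply (K t Ht); auto. split; [apply Rabs_pos_lt; lra| rewrite Rabs_left1; lra].
- intros t Ht Pt. assert (t <= a) by (apply (proj1 Ha); split; [lra|auto]). lra.
Qed.

Lemma first_pt (P : R -> Prop) x y : x <= y -> P y ->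
  (forall t, x <= t <= y -> exists e, 0 < e /\ forall t', x <= t' <= y -> 0 < Rabs (t' - t) < e -> ~ P t') ->
  exists b, x <= b <= y /\ P b /\ forall t, x <= t < b -> ~ P t.
Proof.
intros Hxy Py Iso.
destruct (last_pt (fun t => P (- t)) (- y) (- x)) as [a [Ha [Pa K]]].
- lra.
- rewrite Ropp_involutive; auto.
- intros t Ht. destruct (Iso (- t) ltac:(lra)) as [e [He K]]. exists e; split; auto.
  intros t' Ht' Hr. apply K; [lra|]. rewrite (_ : - t' - - t = - (t' - t)); [|ring]. rewrite Rabs_Ropp; auto.
- exists (- a); split; [lra|]; split; auto.
  intros t Ht Pt. apply (K (- t)); [lra|]. rewrite Ropp_involutive; auto.
Qed.

Lemma B_iso g t : goodc g -> exists e, 0 < e /\ forall t', 0 <= t' <= 1 -> 0 < Rabs (t' - t) < e -> ~ Bpt (g t').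
Proof.
intros [_ [Hi _]]. destruct (avoid_cand g t Hi) as [e [He K]]. exists e; split; auto.
intros t' Ht' Hr HB. apply (K t' Ht' Hr), Bpt_cand; auto.
Qed.

Lemma scurve_B0 g : scurve g -> Bpt (g 0).
Proof. intro H; destruct (scurve_end g H) as [[u [Hu E]] _]; left; exists u; auto. Qed.
Lemma scurve_B1 g : scurve g -> Bpt (g 1).
Proof. intro H; destruct (scurve_end g H) as [_ [u [Hu E]]]; left; exists u; auto. Qed.

Lemma sub_around_right g tau : scurve g -> 0 <= tau < 1 -> exists a b, sub g a b /\ a <= tau < b.
Proof.
intros Hs Ht. pose proof (scurve_good g Hs) as Hg.
destruct (B_iso g tau Hg) as [e [He K]].
set (c := tau + Rmin e (1 - tau) / 2).
assert (Q1 : 0 < Rmin e (1 - tau)) by (apply Rmin_pos; lra).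
pose proof (Rmin_l e (1 - tau)); pose proof (Rmin_r e (1 - tau)).
assert (Iso : forall x y, 0 <= x -> y <= 1 -> forall t, x <= t <= y -> exists e, 0 < e /\ forall t', x <= t' <= y -> 0 < Rabs (t' - t) < e -> ~ Bpt (g t')).
{ intros x y Hx Hy t0 Ht0. destruct (B_iso g t0 Hg) as [e0 [He0 K0]]. exists e0; split; auto.
  intros t' Ht' Hr; apply K0; auto; lra. }
destruct (last_pt (fun t => Bpt (g t)) 0 tau ltac:(lra) (scurve_B0 g Hs) (Iso 0 tau ltac:(lra) ltac:(lra))) as [a [Ha [Pa Ka]]].
destruct (first_pt (fun t => Bpt (g t)) c 1 ltac:(unfold c; lra) (scurve_B1 g Hs) (Iso c 1 ltac:(unfold c; lra) ltac:(lra))) as [b [Hb [Pb Kb]]].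
exists a, b; split; [|unfold c in *; lra].
split; auto; split; [unfold c in *; lra|]; split; auto; split; auto.
intros t Ht'. destruct (Rle_dec t tau) as [L|L]; [apply Ka; lra|].
destruct (Rlt_dec t c) as [L2|L2]; [|apply Kb; lra].
apply K; [lra|]. unfold c in *; rewrite Rabs_right; lra.
Qed.

Lemma sub_around_left g tau : scurve g -> 0 < tau <= 1 -> exists a b, sub g a b /\ a < tau <= b.
Proof.
intros Hs Ht.
destruct (sub_around_right (rev g) (1 - tau) (scurve_rev g Hs) ltac:(lra)) as [a [b [Hsub Hab]]].
apply sub_rev in Hsub. rewrite rev_rev in Hsub.
exists (1 - b), (1 - a); split; auto; lra.
Qed.

Lemma sub_around g tau : scurve g -> 0 <= tau <= 1 -> exists a b, sub g a b /\ a <= tau <= b.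
Proof.
intros Hs Ht. destruct (Rlt_dec tau 1) as [L|L].
- destruct (sub_around_right g tau Hs ltac:(lra)) as [a [b [H1 H2]]]; exists a, b; split; auto; lra.
- destruct (sub_around_left g tau Hs ltac:(lra)) as [a [b [H1 H2]]]; exists a, b; split; auto; lra.
Qed.

Lemma cand_interior g t : scurve g -> 0 < t < 1 -> cand (g t) ->
  sqnorm (g t) < 1 /\ is_junction tr dtr (g t).
Proof.
intros Hs Ht [Hv|[X HX]]; [exfalso; exact (scurve_nv g t Hs Ht Hv)|].
destruct Htr as [_ [_ [_ [_ H]]]].
destruct (H X (g t) HX) as [Hv|Hj]; [exfalso; exact (scurve_nv g t Hs Ht Hv)|].
split; auto. exact (proj1 Hj).
Qed.

Lemma sub_lbound h c d s gm : sub h c d -> c < s -> gm < s ->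
  (forall x, gm < x < s -> exists X, intX X (h x)) -> c <= gm.
Proof.
intros [_ [_ [Hc _]]] H1 H2 K. apply Rnot_lt_le; intro L.
destruct (K c ltac:(lra)) as [X HX]. exact (cand_not_int (Bpt_cand _ Hc) HX).
Qed.

Lemma sub_ubound h c d s dl : sub h c d -> s < d -> s < dl ->
  (forall x, s < x < dl -> exists X, intX X (h x)) -> dl <= d.
Proof.
intros [_ [_ [_ [Hd _]]]] H1 H2 K. apply Rnot_lt_le; intro L.
destruct (K d ltac:(lra)) as [X HX]. exact (cand_not_int (Bpt_cand _ Hd) HX).
Qed.

Lemma three_ends X p1 p2 p3 : is_endpoint (tr X) p1 -> is_endpoint (tr X) p2 -> is_endpoint (tr X) p3 ->
  p1 <> p2 -> p1 <> p3 -> p2 <> p3 -> False.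
Proof.
intros [E1|E1] [E2|E2] [E3|E3]; intros; congruence.
Qed.

Lemma rem_of g t X : scurve g -> 0 <= t <= 1 -> intX X (g t) -> remaining X.
Proof. intros Hs Ht HX; exists g; split; auto; exists t; split; auto. Qed.

Lemma LL g a b h c d t s : sub g a b -> sub h c d -> a < t < b -> c < s < d -> g t = h s ->
  exists eps, 0 < eps /\ forall t', Rabs (t' - t) < eps -> exists s', c <= s' <= d /\ g t' = h s'.
Proof.
intros Hgs Hhs Ht Hs E.
pose proof Hgs as [Hsg [Hab [Hga [Hgb Kg]]]].
pose proof Hhs as [Hsh [Hcd [Hhc [Hhd Kh]]]].
pose proof (scurve_good g Hsg) as Gg. pose proof (scurve_good h Hsh) as Gh.
destruct (cand_or_int g t Gg ltac:(lra)) as [Hc|[X HX]].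
-
  assert (Hch : cand (h s)) by (rewrite <- E; auto).
  destruct (FT_left g t Gg ltac:(lra) Hc) as [X [al [Hal [KX [EX1 [EX2 [NX CX]]]]]]].
  destruct (FT_right g t Gg ltac:(lra) Hc) as [Y [be [Hbe [KY [EY1 [EY2 [NY CY]]]]]]].
  destruct (FT_left h s Gh ltac:(lra) Hch) as [X' [gm [Hgm [KX' [EX1' [EX2' [NX' CX']]]]]]].
  destruct (FT_right h s Gh ltac:(lra) Hch) as [Y' [dl [Hdl [KY' [EY1' [EY2' [NY' CY']]]]]]].
  assert (Lg : c <= gm) by (apply (sub_lbound h c d s gm Hhs); try lra; intros x Hx; exists X'; auto).
  assert (Ld : dl <= d) by (apply (sub_ubound h c d s dl Hhs); try lra; intros x Hx; exists Y'; auto).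
  pose proof Gg as [_ [Hig _]]. pose proof Gh as [_ [Hih _]].
  assert (XY : X <> Y).
  { intro XY; subst Y. apply (three_ends X (g t) (g al) (g be)); auto.
    intro Q; apply Hig in Q; lra. }
  assert (XY' : X' <> Y').
  { intro XY2; subst Y'. apply (three_ends X' (h s) (h gm) (h dl)); auto.
    intro Q; apply Hih in Q; lra. }
  assert (RX : remaining X) by (apply (rem_of g ((al + t) / 2)); auto; [lra| apply KX; lra]).
  assert (RY : remaining Y) by (apply (rem_of g ((t + be) / 2)); auto; [lra| apply KY; lra]).
  assert (RX' : remaining X') by (apply (rem_of h ((gm + s) / 2)); auto; [lra| apply KX'; lra]).
  assert (RY' : remaining Y') by (apply (rem_of h ((s + dl) / 2)); auto; [lra| apply KY'; lra]).
  assert (NB : ~ Bpt (g t)) by (apply Kg; lra).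
  assert (Sq : sqnorm (g t) < 1) by (apply (proj1 (cand_interior g t Hsg ltac:(lra) Hc))).
  assert (In2 : forall Z, remaining Z -> is_endpoint (tr Z) (g t) -> Z = X \/ Z = Y).
  { intros Z RZ EZ. apply NNPP; intro N. apply NB. right; split; auto.
    exists X, Y, Z. split; auto. split; [intro; apply N; left; auto|].
    split; [intro; apply N; right; auto|]. repeat split; auto. }
  assert (CovH : forall Z, (Z = X' \/ Z = Y') -> forall r, 0 <= r <= 1 -> exists s', c <= s' <= d /\ h s' = tr Z r).
  { intros Z [->| ->] r Hr.
    - destruct (CX' r Hr) as [x [Hx Ex]]; exists x; split; auto; lra.
    - destruct (CY' r Hr) as [x [Hx Ex]]; exists x; split; auto; lra. }
  assert (Pair : forall Z, (Z = X \/ Z = Y) -> Z = X' \/ Z = Y').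
  { rewrite <- E in EX1', EY1'.
    destruct (In2 X' RX' EX1') as [A1|A1]; destruct (In2 Y' RY' EY1') as [A2|A2]; subst;
      try (exfalso; apply XY'; auto; fail); intros Z [->| ->]; auto. }
  exists (Rmin (t - al) (be - t)); split; [apply Rmin_pos; lra|].
  intros t' Ht'. pose proof (Rmin_l (t - al) (be - t)); pose proof (Rmin_r (t - al) (be - t)).
  apply Rabs_def2 in Ht'.
  destruct (Rtotal_order t' t) as [L|[Eq|G]].
  + destruct (KX t' ltac:(lra)) as [r [Hr Er]].
    destruct (CovH X (Pair X (or_introl (erefl X))) r ltac:(lra)) as [x [Hx Ex]].
    exists x; split; auto; congruence.
  + subst t'; exists s; split; [lra|auto].
  + destruct (KY t' ltac:(lra)) as [r [Hr Er]].
    destruct (CovH Y (Pair Y (or_intror (erefl Y))) r ltac:(lra)) as [x [Hx Ex]].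
    exists x; split; auto; congruence.
-
  destruct (@TL g X t Gg ltac:(lra) HX) as [al [be [Hal [Hbe [KX [_ _]]]]]].
  assert (HX' : intX X (h s)) by (rewrite <- E; auto).
  destruct (@TL h X s Gh ltac:(lra) HX') as [gm [dl [Hgm [Hdl [KX' [_ CX']]]]]].
  assert (Lg : c <= gm) by (apply (sub_lbound h c d s gm Hhs); try lra; intros x Hx; exists X; apply KX'; lra).
  assert (Ld : dl <= d) by (apply (sub_ubound h c d s dl Hhs); try lra; intros x Hx; exists X; apply KX'; lra).
  exists (Rmin (t - al) (be - t)); split; [apply Rmin_pos; lra|].
  intros t' Ht'. pose proof (Rmin_l (t - al) (be - t)); pose proof (Rmin_r (t - al) (be - t)).
  apply Rabs_def2 in Ht'.
  destruct (KX t' ltac:(lra)) as [r [Hr Er]].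
  destruct (CX' r ltac:(lra)) as [x [Hx Ex]].
  exists x; split; [lra|congruence].
Qed.

Lemma U_right g a b h c d t s : sub g a b -> sub h c d -> a < t < b -> c < s < d -> g t = h s ->
  forall t', t <= t' <= b -> exists s', c <= s' <= d /\ g t' = h s'.
Proof.
intros Hgs Hhs Ht Hs E.
pose proof Hgs as [Hsg [Hab [Hga [Hgb Kg]]]].
pose proof Hhs as [Hsh [Hcd [Hhc [Hhd Kh]]]].
pose proof (scurve_good g Hsg) as Gg. pose proof (scurve_good h Hsh) as Gh.
pose proof Gg as [Cg _]. pose proof Gh as [Ch _].
set (P := fun x => exists s', c <= s' <= d /\ g x = h s').
assert (Pcl : forall z, (forall e, 0 < e -> exists y, Rabs (y - z) < e /\ P y) -> P z).
{ intros z Hz. apply NNPP; intro N.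
  destruct (curve_away h c d (g z) Ch) as [eta [Heta K]].
  { intros x Hx Ex; apply N; exists x; split; auto. }
  destruct (Cg z eta Heta) as [dd [Hdd Kd]].
  destruct (Hz dd Hdd) as [y [Hy [s' [Hs' Es']]]].
  pose proof (K s' Hs') as Q. rewrite <- Es' in Q. pose proof (Kd y Hy). lra. }
set (Ee := fun x => t <= x <= b /\ forall y, t <= y <= x -> P y).
assert (Hb : bound Ee) by (exists b; intros x [Hx _]; lra).
assert (Hne : exists x, Ee x) by (exists t; split; [lra|]; intros y Hy; assert (y = t) by lra; subst y; exists s; split; [lra|auto]).
destruct (completeness Ee Hb Hne) as [z Hz].
assert (Htz : t <= z) by (apply (proj1 Hz); destruct Hne as [x Hx]; split; [lra|]; intros y Hy; assert (y = t) by lra; subst y; exists s; split; [lra|auto]).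
assert (Hzb : z <= b) by (apply (proj2 Hz); intros x [Hx _]; lra).
assert (Below : forall y, t <= y < z -> P y).
{ intros y Hy. destruct (lub_approx _ _ (z - y) Hz ltac:(lra)) as [x [[Hx Kx] Hxy]].
  apply Kx; lra. }
assert (Pz : P z).
{ destruct (Req_dec z t) as [->|Nz]; [exists s; split; [lra|auto]|].
  apply Pcl; intros e He. exists (Rmax t (z - e / 2)).
  split.
  - destruct (Rle_dec t (z - e/2)).
    + rewrite Rmax_right; auto. rewrite Rabs_left1; lra.
    + rewrite Rmax_left; [|lra]. rewrite Rabs_left1; lra.
  - apply Below. split; [apply Rmax_l|]. apply Rmax_lub_lt; lra. }
assert (Zb : z = b).
{ apply NNPP; intro Nz.
  destruct Pz as [s' [Hs' Es']].
  assert (Hs'' : c < s' < d).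
  { split.
    - destruct (Req_dec s' c) as [->|N1]; [|lra]. exfalso; apply (Kg z); [lra|]. rewrite Es'; auto.
    - destruct (Req_dec s' d) as [->|N1]; [|lra]. exfalso; apply (Kg z); [lra|]. rewrite Es'; auto. }
  destruct (LL g a b h c d z s' Hgs Hhs ltac:(lra) Hs'' Es') as [e [He Ke]].
  set (x := Rmin (z + e / 2) b).
  assert (z < x) by (unfold x; apply Rmin_glb_lt; lra).
  assert (x <= b) by apply Rmin_r. assert (x <= z + e/2) by apply Rmin_l.
  assert (Ee x).
  { split; [lra|]. intros y Hy. destruct (Rlt_dec y z) as [L|L]; [apply Below; lra|].
    apply Ke. rewrite Rabs_right; lra. }
  pose proof (proj1 Hz x H2). lra. }
intros t' Ht'. destruct (Rlt_dec t' z) as [L|L]; [apply Below; lra|].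
assert (t' = z) by lra. subst t'. exact Pz.
Qed.

Lemma U g a b h c d t s : sub g a b -> sub h c d -> a < t < b -> c < s < d -> g t = h s ->
  forall t', a <= t' <= b -> exists s', c <= s' <= d /\ g t' = h s'.
Proof.
intros Hgs Hhs Ht Hs E t' Ht'.
destruct (Rle_dec t t') as [L|L]; [eapply U_right; eauto; lra|].
pose proof (sub_rev g a b Hgs) as Hr.
destruct (U_right (rev g) (1 - b) (1 - a) h c d (1 - t) s Hr Hhs ltac:(lra) Hs) with (t' := 1 - t') as [x [Hx Ex]].
- unfold rev; rewrite (_ : 1 - (1 - t) = t); [auto|ring].
- lra.
- exists x; split; auto. unfold rev in Ex. rewrite (_ : 1 - (1 - t') = t') in Ex; [auto|ring].
Qed.

Definition SAP X (x : (R -> point) * (R -> point) * R * R) : Prop :=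
  sec x.1.1.1 /\ smooth_with x.1.1.1 x.1.1.2 /\ sub x.1.1.1 x.1.2 x.2 /\
  exists t, x.1.2 < t < x.2 /\ intX X (x.1.1.1 t).

Lemma int_notB (g : R -> point) (t : R) X : intX X (g t) -> ~ Bpt (g t).
Proof. intros HX HB. exact (cand_not_int (Bpt_cand _ HB) HX). Qed.

Lemma sub_int_inside g a b t X : sub g a b -> 0 <= t <= 1 -> a <= t <= b -> intX X (g t) -> a < t < b.
Proof.
intros [_ [_ [Ha [Hb _]]]] _ Ht HX.
destruct (Req_dec t a) as [->|Na]; [exfalso; exact (int_notB g a X HX Ha)|].
destruct (Req_dec t b) as [->|Nb]; [exfalso; exact (int_notB g b X HX Hb)|]. lra.
Qed.

Lemma SA_exists X : remaining X -> exists x, SAP X x.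
Proof.
intros [h [Hs [t [Ht HX]]]].
assert (Hg : exists g t0, sec g /\ 0 <= t0 <= 1 /\ intX X (g t0)).
{ destruct Hs as [Hs|Hs].
  - exists h, t; auto.
  - exists (rev h), (1 - t); split; auto; split; [lra|]. unfold rev; rewrite (_ : 1 - (1 - t) = t); [auto|ring]. }
destruct Hg as [g [t0 [Hsec [Ht0 HX0]]]].
pose proof Hsec as [u [v [_ [_ [[d Hd] _]]]]].
destruct (sub_around g t0 (or_introl Hsec) Ht0) as [a [b [Hsub Hab]]].
exists (g, d, a, b). simpl. split; auto; split; auto; split; auto.
exists t0; split; auto. eapply sub_int_inside; eauto.
Qed.

Definition SA X := epsilon (inhabits ((fun _ : R => ((0:R), (0:R))), (fun _ : R => ((0:R), (0:R))), (0:R), (0:R))) (SAP X).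
Definition Sg X := (SA X).1.1.1.
Definition Sd X := (SA X).1.1.2.
Definition Sa X := (SA X).1.2.
Definition Sb X := (SA X).2.

Lemma SA_spec X : remaining X ->
  sec (Sg X) /\ smooth_with (Sg X) (Sd X) /\ sub (Sg X) (Sa X) (Sb X) /\
  exists t, Sa X < t < Sb X /\ intX X (Sg X t).
Proof.
intro HR. pose proof (epsilon_spec (inhabits ((fun _ : R => ((0:R), (0:R))), (fun _ : R => ((0:R), (0:R))), (0:R), (0:R))) (SAP X) (SA_exists X HR)) as H.
fold (SA X) in H. unfold Sg, Sd, Sa, Sb. destruct (SA X) as [[[g d] a] b]. simpl in *. exact H.
Qed.

Definition Kimg X p := exists t, Sa X <= t <= Sb X /\ Sg X t = p.
Definition Keq X Y := forall p, Kimg X p <-> Kimg Y p.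

Lemma traverse g a b X t : sub g a b -> a < t < b -> intX X (g t) ->
  exists al be, a <= al < t /\ t < be <= b /\ (forall x, al < x < be -> intX X (g x)) /\
    ((g al = tr X 0 /\ g be = tr X 1) \/ (g al = tr X 1 /\ g be = tr X 0)) /\
    (forall s, 0 <= s <= 1 -> exists x, al <= x <= be /\ g x = tr X s).
Proof.
intros Hsub Ht HX. pose proof Hsub as [Hs [Hab _]].
destruct (@TL g X t (scurve_good g Hs) ltac:(lra) HX) as [al [be [Hal [Hbe [K [E C]]]]]].
assert (c1 : a <= al) by (apply (sub_lbound g a b t al Hsub); try lra; intros x Hx; exists X; apply K; lra).
assert (c2 : be <= b) by (apply (sub_ubound g a b t be Hsub); try lra; intros x Hx; exists X; apply K; lra).
exists al, be; split; [lra|]; split; [lra|]; auto.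
Qed.

Lemma K_track X : remaining X -> forall s, 0 <= s <= 1 -> Kimg X (tr X s).
Proof.
intros HR s Hs. destruct (SA_spec X HR) as [_ [_ [Hsub [t [Ht HX]]]]].
destruct (traverse _ _ _ X t Hsub Ht HX) as [al [be [H1 [H2 [_ [_ C]]]]]].
destruct (C s Hs) as [x [Hx Ex]]. exists x; split; auto; lra.
Qed.

Lemma sub_cover g a b Y t : sub g a b -> a < t < b -> intX Y (g t) ->
  remaining Y /\ forall t', a <= t' <= b -> Kimg Y (g t').
Proof.
intros Hsub Ht HY. pose proof Hsub as [Hs [Hab [Ha [Hb Kb]]]].
assert (RY : remaining Y) by (apply (rem_of g t); auto; lra).
split; auto.
destruct (SA_spec Y RY) as [_ [_ [HsY _]]].
destruct HY as [r [Hr Er]].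
destruct (K_track Y RY r ltac:(lra)) as [s [Hs' Es]].
pose proof HsY as [_ [HabY [HaY [HbY _]]]].
assert (Hs'' : Sa Y < s < Sb Y).
{ split.
  - destruct (Req_dec s (Sa Y)) as [E|N]; [|lra]. exfalso; apply (Kb t Ht). rewrite <- Er, <- Es, E; auto.
  - destruct (Req_dec s (Sb Y)) as [E|N]; [|lra]. exfalso; apply (Kb t Ht). rewrite <- Er, <- Es, E; auto. }
intros t' Ht'.
destruct (U g a b (Sg Y) (Sa Y) (Sb Y) t s Hsub HsY Ht Hs'' ltac:(congruence) t' Ht') as [x [Hx Ex]].
exists x; split; auto.
Qed.

Lemma K_overlap X Y t : remaining X -> remaining Y -> Sa X < t < Sb X -> Kimg Y (Sg X t) -> Keq X Y.
Proof.
intros RX RY Ht [s [Hs Es]].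
destruct (SA_spec X RX) as [_ [_ [HsX _]]].
destruct (SA_spec Y RY) as [_ [_ [HsY _]]].
pose proof HsX as [_ [_ [_ [_ KX]]]].
pose proof HsY as [_ [_ [HaY [HbY _]]]].
assert (Hs' : Sa Y < s < Sb Y).
{ split.
  - destruct (Req_dec s (Sa Y)) as [E|N]; [|lra]. exfalso; apply (KX t Ht). rewrite <- Es, E; auto.
  - destruct (Req_dec s (Sb Y)) as [E|N]; [|lra]. exfalso; apply (KX t Ht). rewrite <- Es, E; auto. }
intro p; split.
- intros [x [Hx Ex]]. destruct (U _ _ _ _ _ _ t s HsX HsY Ht Hs' (esym Es) x Hx) as [y [Hy Ey]].
  exists y; split; auto; congruence.
- intros [x [Hx Ex]]. destruct (U _ _ _ _ _ _ s t HsY HsX Hs' Ht Es x Hx) as [y [Hy Ey]].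
  exists y; split; auto; congruence.
Qed.

Lemma Kimg_B X p : remaining X -> Kimg X p -> Bpt p -> p = Sg X (Sa X) \/ p = Sg X (Sb X).
Proof.
intros RX [t [Ht Et]] HB. destruct (SA_spec X RX) as [_ [_ [[_ [_ [_ [_ K]]]] _]]].
destruct (Req_dec t (Sa X)) as [E|N1]; [left; subst; auto|].
destruct (Req_dec t (Sb X)) as [E|N2]; [right; subst; auto|].
exfalso; apply (K t); [lra|]. rewrite Et; auto.
Qed.

Definition pb (P : Prop) : bool := if excluded_middle_informative P then true else false.
Lemma pbP (P : Prop) : pb P = true <-> P.
Proof. unfold pb; destruct (excluded_middle_informative P); split; auto; discriminate. Qed.

Lemma Keq_sym X Y : Keq X Y -> Keq Y X.
Proof. intros H p; split; apply H. Qed.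
Lemma Keq_trans X Y Z : Keq X Y -> Keq Y Z -> Keq X Z.
Proof. intros H1 H2 p; split; intro; [apply H2, H1|apply H1, H2]; auto. Qed.

Definition rep X := remaining X /\ forall Y : 'I_m, remaining Y -> (Y < X)%N -> ~ Keq Y X.
Definition Rset : {set 'I_m} := [set X | pb (rep X)].

Lemma rep_exists X : remaining X -> exists R, rep R /\ Keq R X.
Proof.
intro RX.
set (P := fun n => pb (exists Y : 'I_m, nat_of_ord Y = n /\ remaining Y /\ Keq Y X)).
assert (exP : exists n, P n).
{ exists (nat_of_ord X). unfold P; apply pbP. exists X; split; auto; split; auto. intro p; tauto. }
case: (ex_minnP exP) => n Pn Hmin.
unfold P in Pn. move/pbP: Pn => [Y [EY [RY KY]]].
exists Y; split; auto; split; auto.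
intros Z RZ LZ KZ.
assert (PZ : P Z) by (unfold P; apply pbP; exists Z; split; auto; split; auto; eapply Keq_trans; eauto).
pose proof (Hmin _ PZ). rewrite EY in LZ. rewrite ltnNge in LZ. by rewrite H in LZ.
Qed.

Lemma rep_distinct X Y : rep X -> rep Y -> X <> Y -> ~ Keq X Y.
Proof.
intros [RX KX] [RY KY] Ne KXY.
case: (ltngtP X Y) => [L|L|E].
- exact (KY X RX L KXY).
- exact (KX Y RY L (Keq_sym _ _ KXY)).
- apply Ne; apply val_inj; exact E.
Qed.

Definition nX (k : 'I_#|Rset|) : 'I_m := enum_val k.
Definition ntr (k : 'I_#|Rset|) : R -> point :=
  fun s => Sg (nX k) (Sa (nX k) + (Sb (nX k) - Sa (nX k)) * s).
Definition dntr (k : 'I_#|Rset|) : R -> point :=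
  fun s => scale (Sb (nX k) - Sa (nX k)) (Sd (nX k) (Sa (nX k) + (Sb (nX k) - Sa (nX k)) * s)).

Lemma nX_rep k : rep (nX k).
Proof. pose proof (enum_valP k) as H. unfold nX. rewrite inE in H. apply pbP; exact H. Qed.

Lemma rep_idx R : rep R -> exists k, nX k = R.
Proof.
intro HR. assert (HRs : R \in Rset) by (rewrite inE; apply pbP; auto).
exists (enum_rank_in HRs R). unfold nX. apply (enum_rankK_in HRs HRs).
Qed.

Lemma Sab X : remaining X -> 0 <= Sa X /\ Sa X < Sb X /\ Sb X <= 1.
Proof. intro RX; destruct (SA_spec X RX) as [_ [_ [[_ [H _]] _]]]; auto. Qed.

Lemma img_ntr k p : img (ntr k) p <-> Kimg (nX k) p.
Proof.
pose proof (Sab _ (proj1 (nX_rep k))) as Hab.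
unfold ntr, Kimg. set (a := Sa (nX k)) in *. set (b := Sb (nX k)) in *. set (g := Sg (nX k)).
split.
- intros [s [Hs E]]. exists (a + (b - a) * s); split; auto.
  split; [|assert ((b - a) * s <= (b - a) * 1) by (apply Rmult_le_compat_l; lra)];
    [assert (0 <= (b - a) * s) by (apply Rmult_le_pos; lra)|]; lra.
- intros [t [Ht E]]. exists ((t - a) / (b - a)). split.
  + split; [unfold Rdiv; apply Rmult_le_pos; [lra| apply Rlt_le, Rinv_0_lt_compat; lra]|].
    apply (Rmult_le_reg_r (b - a)); [lra|]. unfold Rdiv; rewrite Rmult_assoc Rinv_l; lra.
  + rewrite (_ : a + (b - a) * ((t - a) / (b - a)) = t); auto. field; lra.
Qed.

Lemma ntr0 k : ntr k 0 = Sg (nX k) (Sa (nX k)).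
Proof. unfold ntr; f_equal; ring. Qed.
Lemma ntr1 k : ntr k 1 = Sg (nX k) (Sb (nX k)).
Proof. unfold ntr; f_equal; ring. Qed.

Definition W := {x : V | x \in S}.
Definition th' (x : W) : R := th (val x).

Lemma vert'_iff p : is_vertex_point th0 th' p <-> exists u, u \in S /\ p = vpos th0 th u.
Proof.
split.
- intros [w Hw]. exists (val w); split; [exact (valP w)|]. rewrite <- Hw; reflexivity.
- intros [u [Hu ->]]. exists (exist _ u Hu). reflexivity.
Qed.

Lemma Kimg_old X p : remaining X -> Kimg X p -> in_tracks tr p /\ exists t, 0 <= t <= 1 /\ Sg X t = p.
Proof.
intros RX [t [Ht E]]. destruct (SA_spec X RX) as [Hsec [_ [Hsub _]]].
pose proof (Sab X RX).
pose proof (sec_good _ Hsec) as [_ [_ [Hin _]]].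
split; [rewrite <- E; apply Hin; lra|]. exists t; split; auto; lra.
Qed.

Lemma Kimg_vertex X p : remaining X -> Kimg X p -> is_vertex_point th0 th p ->
  exists u, u \in S /\ p = vpos th0 th u.
Proof.
intros RX HK Hv. destruct (Kimg_old X p RX HK) as [_ [t [Ht E]]].
destruct (SA_spec X RX) as [Hsec _].
destruct (scurve_end _ (or_introl Hsec)) as [[u0 [Hu0 E0]] [u1 [Hu1 E1]]].
destruct (Req_dec t 0) as [->|N0]; [exists u0; split; auto; congruence|].
destruct (Req_dec t 1) as [->|N1]; [exists u1; split; auto; congruence|].
exfalso. apply (scurve_nv _ t (or_introl Hsec) ltac:(lra)). rewrite E; auto.
Qed.

Lemma intr'_old p : in_tracks ntr p -> in_tracks tr p.
Proof.
intros [k Hk]. apply img_ntr in Hk. exact (proj1 (Kimg_old _ p (proj1 (nX_rep k)) Hk)).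
Qed.

Lemma N1 (u v : W) g : edge_curve th0 th' ntr u v g -> ec (val u) (val v) g.
Proof.
intros [Hs [Hi0 [Hi1 [E0 [E1 [Hin Hnv]]]]]].
split; auto; split; auto; split; auto; split; [exact E0|]; split; [exact E1|]; split.
- intros p Hp; apply intr'_old, Hin; auto.
- intros t Ht Hv.
  destruct (Hin (g t) ltac:(exists t; split; auto; lra)) as [k Hk].
  apply img_ntr in Hk.
  destruct (Kimg_vertex _ _ (proj1 (nX_rep k)) Hk Hv) as [w [Hw Ew]].
  apply (Hnv t Ht). apply vert'_iff. exists w; auto.
Qed.

Lemma N2 (u v : W) g : ec (val u) (val v) g -> edge_curve th0 th' ntr u v g.
Proof.
intro Hec. pose proof Hec as [Hs [Hi0 [Hi1 [E0 [E1 [Hin Hnv]]]]]].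
assert (Hsec : sec g) by (exists (val u), (val v); split; [exact (valP u)|]; split; [exact (valP v)|auto]).
split; auto; split; auto; split; auto; split; [exact E0|]; split; [exact E1|]; split.
- intros p [tau [Htau Ep]]. subst p.
  destruct (sub_around g tau (or_introl Hsec) Htau) as [a [b [Hsub Hab]]].
  pose proof Hsub as [_ [Hab' [Ha _]]].
  destruct (FT_right g a (sec_good g Hsec) ltac:(lra) (Bpt_cand _ Ha)) as [Y [be [Hbe [KY _]]]].
  set (t1 := (a + Rmin be b) / 2).
  assert (Q : a < Rmin be b) by (apply Rmin_glb_lt; lra).
  pose proof (Rmin_l be b); pose proof (Rmin_r be b).
  destruct (sub_cover g a b Y t1 Hsub ltac:(unfold t1; lra) ltac:(apply KY; unfold t1; lra)) as [RY KK].
  destruct (rep_exists Y RY) as [R0 [HR KR]].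
  destruct (rep_idx R0 HR) as [k Ek].
  exists k. apply img_ntr. rewrite Ek. apply KR, KK; lra.
- intros t Ht Hv. apply vert'_iff in Hv. destruct Hv as [w [_ Ew]].
  apply (Hnv t Ht). exists w; auto.
Qed.

Lemma aff_deriv a c t : derivable_pt_lim (fun s => a + c * s) t c.
Proof.
intros eps He. exists (mkposreal 1 Rlt_0_1). intros h Hh _.
rewrite (_ : (a + c * (t + h) - (a + c * t)) / h - c = 0); [rewrite Rabs_R0; auto|]. field; auto.
Qed.

Lemma smooth_affine g d a b : smooth_with g d -> 0 <= a -> a < b -> b <= 1 ->
  smooth_with (fun s => g (a + (b - a) * s)) (fun s => scale (b - a) (d (a + (b - a) * s))).
Proof.
intros [[D1 [D2 [C1 C2]]] Nz] Ha Hab Hb.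
split; [split; [|split; [|split]]|].
- intro t. simpl. rewrite Rmult_comm.
  apply (derivable_pt_lim_comp (fun s => a + (b - a) * s) (fun x => fst (g x))); [apply aff_deriv| apply D1].
- intro t. simpl. rewrite Rmult_comm.
  apply (derivable_pt_lim_comp (fun s => a + (b - a) * s) (fun x => fst (g x) ) ) || 
  apply (derivable_pt_lim_comp (fun s => a + (b - a) * s) (fun x => snd (g x))); [apply aff_deriv| apply D2].
- intro t. simpl.
  apply (continuity_pt_mult (fun _ => b - a) (fun s => fst (d (a + (b - a) * s)))).
  + apply continuity_pt_const; intros ? ?; auto.
  + apply (continuity_pt_comp (fun s => a + (b - a) * s) (fun y => fst (d y))); [|apply C1].
    apply derivable_continuous_pt; exists (b - a); apply aff_deriv.
- intro t. simpl.
  apply (continuity_pt_mult (fun _ => b - a) (fun s => snd (d (a + (b - a) * s)))).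
  + apply continuity_pt_const; intros ? ?; auto.
  + apply (continuity_pt_comp (fun s => a + (b - a) * s) (fun y => snd (d y))); [|apply C2].
    apply derivable_continuous_pt; exists (b - a); apply aff_deriv.
- intros t Ht E. unfold scale in E. injection E; intros E2 E1.
  assert (0 <= (b - a) * t) by (apply Rmult_le_pos; lra).
  assert ((b - a) * t <= (b - a) * 1) by (apply Rmult_le_compat_l; lra).
  apply (Nz (a + (b - a) * t)); [lra|].
  apply Rmult_integral in E1; apply Rmult_integral in E2.
  destruct E1 as [E1|E1]; [lra|]. destruct E2 as [E2|E2]; [lra|].
  destruct (d (a + (b - a) * t)); simpl in *; subst; auto.
Qed.

Lemma EndDistinct Z1 Z2 p : remaining Z1 -> remaining Z2 -> Z1 <> Z2 ->
  is_endpoint (tr Z1) p -> is_endpoint (tr Z2) p -> Bpt p -> Keq Z1 Z2 -> False.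
Proof.
intros R1 R2 Ne E1 E2 HB HK.
destruct (SA_spec Z1 R1) as [Hsec [_ [Hsub [t1 [Ht1 HX1]]]]].
set (g := Sg Z1) in *. set (a := Sa Z1) in *. set (b := Sb Z1) in *.
pose proof (Sab Z1 R1) as Hab. fold a b in Hab.
pose proof (sec_good g Hsec) as [_ [Hi _]].
destruct (traverse g a b Z1 t1 Hsub Ht1 HX1) as [al1 [be1 [A1 [B1 [K1 [En1 _]]]]]].
destruct (K_track Z2 R2 (1/2) ltac:(lra)) as [x2 [Hx2 Ex2]].
assert (Kx : Kimg Z1 (tr Z2 (1/2))) by (apply HK; exists x2; auto).
destruct Kx as [t2 [Ht2 Et2]]. fold g a b in Ht2, Et2.
assert (HX2 : intX Z2 (g t2)) by (exists (1/2); split; [lra|auto]).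
pose proof (sub_int_inside g a b t2 Z2 Hsub ltac:(lra) Ht2 HX2) as Ht2'.
destruct (traverse g a b Z2 t2 Hsub Ht2' HX2) as [al2 [be2 [A2 [B2 [K2 [En2 _]]]]]].
assert (Kp : Kimg Z1 p) by (destruct E1 as [E1|E1]; rewrite <- E1; apply K_track; auto; lra).
destruct (Kimg_B Z1 p R1 Kp HB) as [Pa|Pb].
- fold g a b in Pa. assert (Q1 : al1 = a).
  { destruct E1 as [E1|E1]; destruct En1 as [[F1 F2]|[F1 F2]];
    first [ (assert (g al1 = g a) by congruence; apply Hi in H; lra)
          | (assert (g be1 = g a) by congruence; apply Hi in H; lra) ]. }
  assert (Q2 : al2 = a).
  { destruct E2 as [E2|E2]; destruct En2 as [[F1 F2]|[F1 F2]];
    first [ (assert (g al2 = g a) by congruence; apply Hi in H; lra)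
          | (assert (g be2 = g a) by congruence; apply Hi in H; lra) ]. }
  set (x := a + Rmin (be1 - a) (be2 - a) / 2).
  assert (Q : 0 < Rmin (be1 - a) (be2 - a)) by (apply Rmin_pos; lra).
  pose proof (Rmin_l (be1 - a) (be2 - a)); pose proof (Rmin_r (be1 - a) (be2 - a)).
  assert (I1 : intX Z1 (g x)) by (apply K1; unfold x; lra).
  assert (I2 : intX Z2 (g x)) by (apply K2; unfold x; lra).
  apply Ne. apply (int_unique I2 (int_img I1)).
- fold g a b in Pb. assert (Q1 : be1 = b).
  { destruct E1 as [E1|E1]; destruct En1 as [[F1 F2]|[F1 F2]];
    first [ (assert (g be1 = g b) by congruence; apply Hi in H; lra)
          | (assert (g al1 = g b) by congruence; apply Hi in H; lra) ]. }
  assert (Q2 : be2 = b).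
  { destruct E2 as [E2|E2]; destruct En2 as [[F1 F2]|[F1 F2]];
    first [ (assert (g be2 = g b) by congruence; apply Hi in H; lra)
          | (assert (g al2 = g b) by congruence; apply Hi in H; lra) ]. }
  set (x := b - Rmin (b - al1) (b - al2) / 2).
  assert (Q : 0 < Rmin (b - al1) (b - al2)) by (apply Rmin_pos; lra).
  pose proof (Rmin_l (b - al1) (b - al2)); pose proof (Rmin_r (b - al1) (b - al2)).
  assert (I1 : intX Z1 (g x)) by (apply K1; unfold x; lra).
  assert (I2 : intX Z2 (g x)) by (apply K2; unfold x; lra).
  apply Ne. apply (int_unique I2 (int_img I1)).
Qed.

Lemma tr_smooth Z : smooth_with (tr Z) (dtr Z).
Proof. destruct Htr as [H _]; apply H. Qed.

Lemma TE k al : al = 0 \/ al = 1 ->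
  exists Z e, (e = 0 \/ e = 1) /\ tr Z e = ntr k al /\ parallel (dntr k al) (dtr Z e).
Proof.
intro Hal.
set (X := nX k). pose proof (proj1 (nX_rep k)) as RX. fold X in RX.
destruct (SA_spec X RX) as [Hsec [[[D1 [D2 _]] _] [Hsub _]]].
pose proof (Sab X RX) as Hab.
pose proof Hsub as [_ [_ [Ha [Hb _]]]].
pose proof (sec_good _ Hsec) as Gg.
set (g := Sg X) in *. set (a := Sa X) in *. set (b := Sb X) in *. set (d := Sd X) in *.
assert (Gen : forall tau, 0 <= tau <= 1 -> forall Z, is_endpoint (tr Z) (g tau) ->
   (forall del, 0 < del -> exists t, 0 < Rabs (t - tau) < del /\ exists r, 0 <= r <= 1 /\ g t = tr Z r) ->
   exists e, (e = 0 \/ e = 1) /\ tr Z e = g tau /\ parallel (d tau) (dtr Z e)).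
{ intros tau Htau Z EZ Hnear.
  pose proof (tr_smooth Z) as [[T1 [T2 _]] Tnz].
  assert (Ex : exists e, (e = 0 \/ e = 1) /\ tr Z e = g tau) by (destruct EZ as [E|E]; [exists 0|exists 1]; auto).
  destruct Ex as [e [He Ee]]. exists e; split; auto; split; auto.
  apply (PT g (d tau) tau (tr Z) (dtr Z e) e); auto.
  - apply tr_cont.
  - apply tr_inj.
  - destruct He; subst; lra.
  - apply Tnz; destruct He; subst; lra. }
destruct Hal as [->| ->].
- destruct (FT_right g a Gg ltac:(lra) (Bpt_cand _ Ha)) as [Z [be [Hbe [KZ [EZ _]]]]].
  destruct (Gen a ltac:(lra) Z EZ) as [e [He [Ee Pe]]].
  { intros del Hdel. exists (a + Rmin del (be - a) / 2).
    assert (Q : 0 < Rmin del (be - a)) by (apply Rmin_pos; lra).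
    pose proof (Rmin_l del (be - a)); pose proof (Rmin_r del (be - a)).
    split; [rewrite (_ : a + Rmin del (be - a) / 2 - a = Rmin del (be - a) / 2); [|ring]; rewrite Rabs_right; lra|].
    destruct (KZ (a + Rmin del (be - a) / 2) ltac:(lra)) as [r [Hr Er]]. exists r; split; [lra|auto]. }
  exists Z, e; split; auto. split; [rewrite Ee ntr0; auto|].
  unfold dntr. fold X a b d. rewrite (_ : a + (b - a) * 0 = a); [|ring].
  apply par_scale_l; auto.
- destruct (FT_left g b Gg ltac:(lra) (Bpt_cand _ Hb)) as [Z [al [Hal [KZ [EZ _]]]]].
  destruct (Gen b ltac:(lra) Z EZ) as [e [He [Ee Pe]]].
  { intros del Hdel. exists (b - Rmin del (b - al) / 2).
    assert (Q : 0 < Rmin del (b - al)) by (apply Rmin_pos; lra).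
    pose proof (Rmin_l del (b - al)); pose proof (Rmin_r del (b - al)).
    split; [rewrite (_ : b - Rmin del (b - al) / 2 - b = - (Rmin del (b - al) / 2)); [|ring]; rewrite Rabs_Ropp Rabs_right; lra|].
    destruct (KZ (b - Rmin del (b - al) / 2) ltac:(lra)) as [r [Hr Er]]. exists r; split; [lra|auto]. }
  exists Z, e; split; auto. split; [rewrite Ee ntr1; auto|].
  unfold dntr. fold X a b d. rewrite (_ : a + (b - a) * 1 = b); [|ring].
  apply par_scale_l; auto.
Qed.

Lemma new_end Z p : Bpt p -> remaining Z -> is_endpoint (tr Z) p ->
  exists k, Keq (nX k) Z /\ is_endpoint (ntr k) p.
Proof.
intros HB RZ EZ. destruct (rep_exists Z RZ) as [R0 [HR KR]].
destruct (rep_idx R0 HR) as [k Ek]. exists k. rewrite Ek. split; auto.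
assert (Kp : Kimg R0 p) by (apply KR; destruct EZ as [E|E]; rewrite <- E; apply K_track; auto; lra).
rewrite <- Ek in Kp. destruct (Kimg_B _ p (proj1 (nX_rep k)) Kp HB) as [E|E]; [left; rewrite ntr0|right; rewrite ntr1]; auto.
Qed.

Lemma nz_dtr Z e : e = 0 \/ e = 1 -> dtr Z e <> (0, 0).
Proof. intro He; apply (proj2 (tr_smooth Z)); destruct He; subst; lra. Qed.

Lemma Jnew p : Bpt p -> sqnorm p < 1 -> (exists X1 X2 X3, X1 <> X2 /\ X1 <> X3 /\ X2 <> X3 /\
     remaining X1 /\ remaining X2 /\ remaining X3 /\
     is_endpoint (tr X1) p /\ is_endpoint (tr X2) p /\ is_endpoint (tr X3) p) ->
  is_junction ntr dntr p.
Proof.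
intros HB Hsq [X1 [X2 [X3 [N12 [N13 [N23 [R1 [R2 [R3 [E1 [E2 E3]]]]]]]]]]].
split; auto. split.
- destruct (new_end X1 p HB R1 E1) as [k1 [K1 F1]].
  destruct (new_end X2 p HB R2 E2) as [k2 [K2 F2]].
  destruct (new_end X3 p HB R3 E3) as [k3 [K3 F3]].
  exists k1, k2, k3.
  split; [intro E; subst k2; apply (EndDistinct X1 X2 p R1 R2 N12 E1 E2 HB); eapply Keq_trans; [apply Keq_sym; eauto| auto]|].
  split; [intro E; subst k3; apply (EndDistinct X1 X3 p R1 R3 N13 E1 E3 HB); eapply Keq_trans; [apply Keq_sym; eauto| auto]|].
  split; [intro E; subst k3; apply (EndDistinct X2 X3 p R2 R3 N23 E2 E3 HB); eapply Keq_trans; [apply Keq_sym; eauto| auto]|].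
  auto.
- intros i j a' b' Ha Hb Ei Ej.
  destruct (TE i a' Ha) as [Z [e [He [Ee Pe]]]].
  destruct (TE j b' Hb) as [Z' [e' [He' [Ee' Pe']]]].
  rewrite Ei in Ee. rewrite Ej in Ee'.
  assert (EZ : is_endpoint (tr Z) p) by (destruct He; subst e; [left|right]; auto).
  pose proof (end_junction Z p EZ Hsq) as [_ [_ J]].
  pose proof (J Z Z' e e' He He' Ee Ee') as P1.
  apply (par_trans _ (dtr Z' e')); [apply (par_trans _ (dtr Z e)); auto; apply nz_dtr; auto| |apply nz_dtr; auto].
  apply par_sym; auto.
Qed.

Lemma new_tracks_ok : tracks_ok th0 th' ntr dntr.
Proof.
split; [|split; [|split; [|split]]].
- intro k. pose proof (proj1 (nX_rep k)) as RX.
  destruct (SA_spec _ RX) as [_ [Hs _]]. pose proof (Sab _ RX).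
  apply smooth_affine; auto; lra.
- intros k s t Hs Ht E. pose proof (proj1 (nX_rep k)) as RX.
  destruct (SA_spec _ RX) as [Hsec _]. pose proof (Sab _ RX) as Hab.
  pose proof (sec_good _ Hsec) as [_ [Hi _]].
  unfold ntr in E. set (a := Sa (nX k)) in *. set (b := Sb (nX k)) in *.
  assert (0 <= (b - a) * s) by (apply Rmult_le_pos; lra).
  assert ((b - a) * s <= (b - a) * 1) by (apply Rmult_le_compat_l; lra).
  assert (0 <= (b - a) * t) by (apply Rmult_le_pos; lra).
  assert ((b - a) * t <= (b - a) * 1) by (apply Rmult_le_compat_l; lra).
  apply Hi in E; [|lra|lra].
  apply (Rmult_eq_reg_l (b - a)); lra.
- intros i j Nij p Hi Hj.
  apply img_ntr in Hi. apply img_ntr in Hj.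
  pose proof (nX_rep i) as RI. pose proof (nX_rep j) as RJ.
  assert (NX : nX i <> nX j) by (intro E; apply Nij; apply enum_val_inj; exact E).
  pose proof (rep_distinct _ _ RI RJ NX) as NK.
  assert (Gen : forall k l, rep (nX k) -> rep (nX l) -> ~ Keq (nX k) (nX l) -> Kimg (nX k) p -> Kimg (nX l) p -> is_endpoint (ntr k) p).
  { intros k l Rk Rl NKl [t [Ht Et]] Hl.
    destruct (Req_dec t (Sa (nX k))) as [E|N1]; [left; rewrite ntr0 -E; auto|].
    destruct (Req_dec t (Sb (nX k))) as [E|N2]; [right; rewrite ntr1 -E; auto|].
    exfalso; apply NKl. apply (K_overlap _ _ t (proj1 Rk) (proj1 Rl)); [lra|]. rewrite Et; auto. }
  split; [apply (Gen i j)|apply (Gen j i)]; auto.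
  intro K; apply NK, Keq_sym; auto.
- intros k t Ht. pose proof (proj1 (nX_rep k)) as RX.
  destruct (SA_spec _ RX) as [Hsec _]. pose proof (Sab _ RX) as Hab.
  unfold ntr. set (a := Sa (nX k)) in *. set (b := Sb (nX k)) in *.
  assert (0 < (b - a) * t) by (apply Rmult_lt_0_compat; lra).
  assert ((b - a) * t < (b - a) * 1) by (apply Rmult_lt_compat_l; lra).
  destruct (cand_or_int _ (a + (b - a) * t) (sec_good _ Hsec) ltac:(lra)) as [C|[Z HZ]].
  + exact (proj1 (cand_interior _ (a + (b - a) * t) (or_introl Hsec) ltac:(lra) C)).
  + exact (int_sq HZ).
- intros k p Ep. pose proof (proj1 (nX_rep k)) as RX.
  destruct (SA_spec _ RX) as [_ [_ [[_ [_ [Ha [Hb _]]]] _]]].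
  assert (HB : Bpt p) by (destruct Ep as [E|E]; [rewrite <- E, ntr0| rewrite <- E, ntr1]; auto).
  destruct HB as [[u [Hu Eu]]|[Hsq H3]].
  + left. apply vert'_iff. exists u; auto.
  + right. apply Jnew; auto. right; auto.
Qed.

Lemma new_draws : draws th0 th' ntr dntr (induced_adj S adj).
Proof.
destruct Hdr as [_ [Hnl [Hadj [Hna Hcov]]]].
split; [exact new_tracks_ok|]. split; [|split; [|split]].
- intros v g H. exact (Hnl (val v) g (N1 v v g H)).
- intros u v Nuv Huv.
  assert (N : val u <> val v) by (intro E; apply Nuv, val_inj, E).
  destruct (Hadj (val u) (val v) N Huv) as [[g Hg] Hu].
  split; [exists g; apply N2; exact Hg|].
  intros g1 g2 H1 H2. apply Hu.
  + destruct H1 as [H1|H1]; [left; exact (N1 _ _ _ H1)|right; exact (N1 _ _ _ H1)].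
  + destruct H2 as [H2|H2]; [left; exact (N1 _ _ _ H2)|right; exact (N1 _ _ _ H2)].
- intros u v Nuv Huv g Hg.
  assert (N : val u <> val v) by (intro E; apply Nuv, val_inj, E).
  exact (Hna (val u) (val v) N Huv g (N1 _ _ _ Hg)).
- intro k. pose proof (proj1 (nX_rep k)) as RX.
  destruct (SA_spec _ RX) as [[u [v [Hu [Hv Hec]]]] _].
  pose proof (Sab _ RX) as Hab.
  exists (exist _ u Hu), (exist _ v Hv), (Sg (nX k)). split; [apply N2; exact Hec|].
  intros p Hp. apply img_ntr in Hp. destruct Hp as [t [Ht Et]]. exists t; split; auto; lra.
Qed.
End Tracks.

Theorem corollary26 (V : finType) (adj lt : rel V) (S : {set V}) :
  strict_outerconfluent_ordered adj lt ->
  strict_outerconfluent_ordered (induced_adj S adj) (induced_lt S lt).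
Proof.
intros [Hsym [Hirr [m [th0 [th [tr [dtr [Hrange [Hinj [Hlt Hdr]]]]]]]]]].
split; [intros x y; unfold induced_adj; apply Hsym|].
split; [intros x; unfold induced_adj; apply Hirr|].
exists #|Rset V m th0 th tr S|, th0, (th' V th S), (ntr V m th0 th tr S), (dntr V m th0 th tr S).
split; [intro v; apply Hrange|].
split; [intros x y E; apply val_inj, Hinj; exact E|].
split; [intros x y; apply Hlt|].
exact (new_draws V m th0 th tr dtr (proj1 Hdr) adj S Hdr).
Qed.
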